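(* Let $d\in\mathbb{N}$ and let $S^0_{\infty,1}B(\mathbb{T}^d)$ be normed with respect to an admissible one-dimensional $\psi$. Then there are continuous embeddings $$\mathcal{A}(\mathbb{T}^d)\hookrightarrow S^0_{\infty,1}B(\mathbb{T}^d)\hookrightarrow C(\mathbb{T}^d),$$ and both embedding operators have norm exactly one.
   Context: $\mathbb{T}^d=[0,2\pi)^d$ with the normalized Lebesgue measure $(2\pi)^{-d}dx$; $\hat f(k)=(2\pi)^{-d}\int_{\mathbb{T}^d}f(x)e^{-ik\cdot x}dx$. Periodic distributions $g$ are identified with formal Fourier series $\sum_k\hat g(k)e^{ik\cdot x}$ with polynomially bounded coefficients. Admissible one-dimensional $\psi$: real-valued nonnegative $\psi\in C_0^\infty(\mathbb{R})$ with support in $[-3/2,3/2]$, $\psi(\xi/2)-\psi(\xi)\ge0$ for all $\xi$, $\psi=1$ on $[-1,1]$; $\varphi_0=\psi$, $\varphi_j(\xi)=\psi(2^{-j}\xi)-\psi(2^{-j+1}\xi)$ for $j\ge1$. For $1\le p,q\le\infty$, $t\in\mathbb{R}$, $S^t_{p,q}B(\mathbb{T}^d)$ is the space of periodic distributions $g$ with $\|g|S^t_{p,q}B(\mathbb{T}^d)\|=\big(\sum_{\ell\in\mathbb{N}_0^d}2^{|\ell|_1tq}\|\sum_{k\in\mathbb{Z}^d}\prod_{j=1}^d\varphi_{\ell_j}(k_j)\hat g(k)e^{ik\cdot x}|L_p(\mathbb{T}^d)\|^q\big)^{1/q}<\infty$ (usual modification for $q=\infty$), $|\ell|_1=\ell_1+\dots+\ell_d$.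 $\mathcal{A}(\mathbb{T}^d)$: $f\in L_1$ with $\|f|\mathcal{A}\|=\sum_k|\hat f(k)|<\infty$. $C(\mathbb{T}^d)$: continuous periodic functions, sup-norm; elements with continuous representatives are identified with them. *)

(* Defs.v *)
From Stdlib Require Import Reals Lra Lia ZArith List ClassicalEpsilon.
Import ListNotations.
Open Scope R_scope.

(* Supremum of a set of reals (junk value 0 if empty or unbounded). *)
Definition Rsup (E : R -> Prop) : R :=
  match excluded_middle_informative (bound E /\ exists x, E x) with
  | left H => proj1_sig (completeness E (proj1 H) (proj2 H))
  | right _ => 0
  end.

(* Limit of a real sequence (junk value 0 if divergent). *)
Definition Rlim (u : nat -> R) : R :=
  match excluded_middle_informative (exists l, Un_cv u l) with
  | left H => proj1_sig (constructive_indefinite_description _ H)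
  | right _ => 0
  end.

Definition Rsum (l : list R) : R := fold_right Rplus 0 l.

Definition Cpx := (R * R)%type.
Definition Cadd (a b : Cpx) : Cpx := (fst a + fst b, snd a + snd b).
Definition Csub (a b : Cpx) : Cpx := (fst a - fst b, snd a - snd b).
Definition Cmul (a b : Cpx) : Cpx :=
  (fst a * fst b - snd a * snd b, fst a * snd b + snd a * fst b).
Definition Cscale (r : R) (a : Cpx) : Cpx := (r * fst a, r * snd a).
Definition Cmod (a : Cpx) : R := sqrt (fst a ^ 2 + snd a ^ 2).
Definition Cexpi (t : R) : Cpx := (cos t, sin t).
Definition Csum (l : list Cpx) : Cpx := fold_right Cadd (0, 0) l.
Definition Clim (u : nat -> Cpx) : Cpx :=
  (Rlim (fun n => fst (u n)), Rlim (fun n => snd (u n))).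

(** * Vectors in Z^d, R^d, N_0^d as lists of length d *)

Fixpoint lbox {A : Type} (d : nat) (vals : list A) : list (list A) :=
  match d with
  | O => [nil]
  | S d' => flat_map (fun z => map (cons z) (lbox d' vals)) vals
  end.

Definition zrange (N : nat) : list Z :=
  map (fun i => (Z.of_nat i - Z.of_nat N)%Z) (seq 0 (2 * N + 1)).

Definition zbox (d N : nat) : list (list Z) := lbox d (zrange N).

Definition dot (k : list Z) (x : list R) : R :=
  Rsum (map (fun p => IZR (fst p) * snd p) (combine k x)).

(* Sum over Z^d of a family, as the limit of the sums over the cubes
   {-N..N}^d (used only for finitely supported or absolutely summable
   families, where this is the unambiguous value of the sum). *)
Definition Zsum (d : nat) (a : list Z -> Cpx) : Cpx :=
  Clim (fun N => Csum (map a (zbox d N))).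

Definition smooth (f : R -> R) : Prop :=
  exists D : nat -> R -> R,
    D O = f /\ forall n x, derivable_pt_lim (D n) x (D (S n) x).

Definition admissible (psi : R -> R) : Prop :=
  smooth psi /\
  (forall xi, 3/2 < Rabs xi -> psi xi = 0) /\
  (forall xi, 0 <= psi xi) /\
  (forall xi, psi (xi / 2) - psi xi >= 0) /\
  (forall xi, -1 <= xi <= 1 -> psi xi = 1).

Definition phi (psi : R -> R) (j : nat) (xi : R) : R :=
  match j with
  | O => psi xi
  | S j' => psi (xi / 2 ^ j) - psi (xi / 2 ^ j')
  end.

Definition phiprod (psi : R -> R) (l : list nat) (k : list Z) : R :=
  fold_right Rmult 1 (map (fun p => phi psi (fst p) (IZR (snd p))) (combine l k)).

(* sup norm of a function on R^d (= L_infty norm for continuous functions) *)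
Definition supnorm (d : nat) (F : list R -> Cpx) : R :=
  Rsup (fun r => exists x, length x = d /\ r = Cmod (F x)).

Definition bounded_fun (d : nat) (F : list R -> Cpx) : Prop :=
  bound (fun r => exists x, length x = d /\ r = Cmod (F x)).

(* A periodic distribution is given by its Fourier coefficients
   g : Z^d -> C with polynomially bounded coefficients. *)
Definition poly_bounded (d : nat) (g : list Z -> Cpx) : Prop :=
  exists (C : R) (m : nat), forall k, length k = d ->
    Cmod (g k) <= C * (1 + Rsum (map (fun z => Rabs (IZR z)) k)) ^ m.

Definition block (psi : R -> R) (d : nat) (g : list Z -> Cpx) (l : list nat)
  : list R -> Cpx :=
  fun x => Zsum d (fun k => Cscale (phiprod psi l k) (Cmul (g k) (Cexpi (dot k x)))).

(* partial sums of  sum_{l in N_0^d} 2^{|l|_1 * 0} || block_l |L_infty|| *)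
Definition S_partial (psi : R -> R) (d : nat) (g : list Z -> Cpx) (N : nat) : R :=
  Rsum (map (fun l => supnorm d (block psi d g l)) (lbox d (seq 0 (S N)))).

Definition in_S (psi : R -> R) (d : nat) (g : list Z -> Cpx) : Prop :=
  poly_bounded d g /\
  (forall l, length l = d -> bounded_fun d (block psi d g l)) /\
  bound (fun r => exists N, r = S_partial psi d g N).

Definition normS (psi : R -> R) (d : nat) (g : list Z -> Cpx) : R :=
  Rsup (fun r => exists N, r = S_partial psi d g N).

(* Wiener algebra A(T^d), identified with the Fourier coefficients *)
Definition A_partial (d : nat) (g : list Z -> Cpx) (N : nat) : R :=
  Rsum (map (fun k => Cmod (g k)) (zbox d N)).

Definition in_A (d : nat) (g : list Z -> Cpx) : Prop :=
  bound (fun r => exists N, r = A_partial d g N).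

Definition normA (d : nat) (g : list Z -> Cpx) : R :=
  Rsup (fun r => exists N, r = A_partial d g N).

Definition shift2pi (x : list R) (j : nat) : list R :=
  firstn j x ++ (nth j x 0 + 2 * PI) :: skipn (S j) x.

Definition contT (d : nat) (f : list R -> Cpx) : Prop :=
  (forall x, length x = d -> forall eps, 0 < eps -> exists delta, 0 < delta /\
     forall y, length y = d ->
       (forall j, (j < d)%nat -> Rabs (nth j y 0 - nth j x 0) < delta) ->
       Cmod (Csub (f y) (f x)) < eps) /\
  (forall x j, length x = d -> (j < d)%nat -> f (shift2pi x j) = f x).

Definition grid (N : nat) (j : list nat) : list R :=
  map (fun ji => 2 * PI * INR ji / INR N) j.

(* fhat(k) = (2 pi)^{-d} int_{T^d} f(x) e^{-ik.x} dx, as the limit of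
   Riemann sums over the uniform grid (2 pi / N) {0..N-1}^d *)
Definition fcoef (d : nat) (f : list R -> Cpx) (k : list Z) : Cpx :=
  Clim (fun N => Cscale (/ (INR N ^ d))
    (Csum (map (fun j => Cmul (f (grid N j)) (Cexpi (- dot k (grid N j))))
               (lbox d (seq 0 N))))).

(* Main.v *)
Require Import Defs.
From Stdlib Require Import Reals List.
From Stdlib Require Import Reals Lra Lia ZArith List ClassicalEpsilon Classical FunctionalExtensionality.
Require Coquelicot.Complex.
Import ListNotations.
Open Scope R_scope.


Lemma Cmod_ge0 a : 0 <= Cmod a.
Proof. exact (Complex.Cmod_ge_0 a). Qed.
Lemma Cmod_tri a b : Cmod (Cadd a b) <= Cmod a + Cmod b.
Proof. exact (Complex.Cmod_triangle a b). Qed.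
Lemma Cmod_mul a b : Cmod (Cmul a b) = Cmod a * Cmod b.
Proof. exact (Complex.Cmod_mult a b). Qed.
Lemma Cmod_real r : Cmod (r, 0) = Rabs r.
Proof. exact (Complex.Cmod_R r). Qed.
Lemma Cmod_fst a : Rabs (fst a) <= Cmod a.
Proof. eapply Rle_trans; [apply Rmax_l|]; apply (Complex.Rmax_Cmod a). Qed.
Lemma Cmod_snd a : Rabs (snd a) <= Cmod a.
Proof. eapply Rle_trans; [apply Rmax_r|]; apply (Complex.Rmax_Cmod a). Qed.
Lemma Cmod_le_sum a : Cmod a <= Rabs (fst a) + Rabs (snd a).
Proof.
  destruct a as [x y]. unfold Cmod; simpl.
  rewrite <- (sqrt_Rsqr (Rabs x + Rabs y)) by (pose proof (Rabs_pos x); pose proof (Rabs_pos y); lra).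
  apply sqrt_le_1_alt. unfold Rsqr. pose proof (Rabs_pos x); pose proof (Rabs_pos y).
  pose proof (Rsqr_abs x); pose proof (Rsqr_abs y). unfold Rsqr in *. simpl. nra.
Qed.
Lemma Cmod_eq0 a : Cmod a = 0 -> a = (0,0).
Proof. intro H. exact (Complex.Cmod_eq_0 a H). Qed.
Lemma Cmod_scale r a : Cmod (Cscale r a) = Rabs r * Cmod a.
Proof.
  replace (Cscale r a) with (Cmul (r,0) a).
  - rewrite Cmod_mul, Cmod_real; auto.
  - unfold Cmul, Cscale; destruct a; simpl; f_equal; ring.
Qed.
Lemma Cmod_expi t : Cmod (Cexpi t) = 1.
Proof.
  unfold Cmod, Cexpi; simpl. replace (cos t * (cos t * 1) + sin t * (sin t * 1)) with 1.
  apply sqrt_1. pose proof (sin2_cos2 t) as H; unfold Rsqr in H; rewrite !Rmult_1_r; lra.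
Qed.
Lemma Cmod_opp_sub a b : Cmod (Csub a b) = Cmod (Csub b a).
Proof. destruct a, b; unfold Cmod, Csub; simpl. f_equal. ring. Qed.
Lemma Csub_tri a b c : Cmod (Csub a c) <= Cmod (Csub a b) + Cmod (Csub b c).
Proof.
  replace (Csub a c) with (Cadd (Csub a b) (Csub b c)) by (destruct a,b,c; unfold Csub, Cadd; simpl; f_equal; ring).
  apply Cmod_tri.
Qed.
Lemma Csub_diag a : Csub a a = (0,0).
Proof. destruct a; unfold Csub; simpl; f_equal; ring. Qed.
Lemma Cmod_00 : Cmod (0,0) = 0.
Proof. rewrite Cmod_real. apply Rabs_R0. Qed.

Lemma abs_sq x : Rabs x * Rabs x = x * x.
Proof. rewrite <- Rabs_mult; apply Rabs_right; apply Rle_ge; nra. Qed.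
Lemma sin_abs_pos y : 0 < y -> Rabs (sin y) <= y.
Proof.
  intro Hy. pose proof (sin_lt_x y Hy). pose proof (SIN_bound y).
  destruct (Rle_dec y 1).
  - assert (0 <= sin y) by (apply sin_ge_0; pose proof PI2_3_2; lra).
    rewrite Rabs_right; lra.
  - unfold Rabs; destruct Rcase_abs; lra.
Qed.
Lemma sin_abs_le x : Rabs (sin x) <= Rabs x.
Proof.
  destruct (Rtotal_order x 0) as [H|[H|H]].
  - assert (E: sin x = - sin (-x)) by (rewrite sin_neg; ring). rewrite E, Rabs_Ropp.
    rewrite (Rabs_left x H). apply sin_abs_pos; lra.
  - subst. rewrite sin_0. lra.
  - rewrite (Rabs_right x) by lra. apply sin_abs_pos; lra.
Qed.

Lemma Cexpi_lip a b : Cmod (Csub (Cexpi a) (Cexpi b)) <= Rabs (a - b).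
Proof.
  unfold Cmod, Csub, Cexpi; cbn [fst snd].
  rewrite <- (sqrt_Rsqr (Rabs (a-b))) by apply Rabs_pos.
  apply sqrt_le_1_alt.
  assert (E: (cos a - cos b) ^ 2 + (sin a - sin b) ^ 2 = 2 - 2 * cos (a - b)).
  { rewrite cos_minus. pose proof (sin2_cos2 a). pose proof (sin2_cos2 b). unfold Rsqr in *. nra. }
  rewrite E.
  replace (a - b) with (2 * ((a - b)/2)) at 1 by field.
  rewrite cos_2a_sin.
  pose proof (sin_abs_le ((a-b)/2)) as H.
  assert (H1: sin ((a-b)/2) * sin ((a-b)/2) <= ((a-b)/2) * ((a-b)/2)).
  { rewrite <- (abs_sq (sin _)), <- (abs_sq ((a-b)/2)).
    apply Rmult_le_compat; auto using Rabs_pos. }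
  rewrite <- Rsqr_abs. unfold Rsqr. nra.
Qed.

Lemma Cexpi_add a b : Cexpi (a + b) = Cmul (Cexpi a) (Cexpi b).
Proof. unfold Cexpi, Cmul; simpl. rewrite cos_plus, sin_plus. f_equal; ring. Qed.
Lemma Cexpi_0 : Cexpi 0 = (1, 0).
Proof. unfold Cexpi. rewrite cos_0, sin_0. auto. Qed.

Lemma IZR_pos_INR p : IZR (Z.pos p) = INR (Pos.to_nat p).
Proof. rewrite INR_IZR_INZ, positive_nat_Z; auto. Qed.
Lemma cos_2piZ t n : cos (t + 2 * PI * IZR n) = cos t.
Proof.
  destruct n as [|p|p].
  - f_equal; ring.
  - rewrite (IZR_pos_INR p).
    replace (t + 2 * PI * INR (Pos.to_nat p)) with (t + 2 * INR (Pos.to_nat p) * PI) by ring.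
    apply cos_period.
  - replace (IZR (Z.neg p)) with (- INR (Pos.to_nat p)).
    2:{ rewrite <- Pos2Z.opp_pos, opp_IZR, (IZR_pos_INR p); auto. }
    rewrite <- (cos_period (t + 2 * PI * - INR (Pos.to_nat p)) (Pos.to_nat p)). f_equal; ring.
Qed.
Lemma sin_2piZ t n : sin (t + 2 * PI * IZR n) = sin t.
Proof.
  destruct n as [|p|p].
  - f_equal; ring.
  - rewrite (IZR_pos_INR p).
    replace (t + 2 * PI * INR (Pos.to_nat p)) with (t + 2 * INR (Pos.to_nat p) * PI) by ring.
    apply sin_period.
  - replace (IZR (Z.neg p)) with (- INR (Pos.to_nat p)).
    2:{ rewrite <- Pos2Z.opp_pos, opp_IZR, (IZR_pos_INR p); auto. }
    rewrite <- (sin_period (t + 2 * PI * - INR (Pos.to_nat p)) (Pos.to_nat p)). f_equal; ring.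
Qed.
Lemma Cexpi_2piZ t n : Cexpi (t + 2 * PI * IZR n) = Cexpi t.
Proof. unfold Cexpi. rewrite cos_2piZ, sin_2piZ; auto. Qed.

Lemma Rsum_app l1 l2 : Rsum (l1 ++ l2) = Rsum l1 + Rsum l2.
Proof. induction l1; simpl; [ring| rewrite IHl1; ring]. Qed.
Lemma Csum_app l1 l2 : Csum (l1 ++ l2) = Cadd (Csum l1) (Csum l2).
Proof. induction l1; simpl; [destruct (Csum l2); unfold Cadd; simpl; f_equal; ring| rewrite IHl1; unfold Cadd; simpl; f_equal; ring]. Qed.

Lemma Rsum_le {A} (f g : A -> R) l : (forall x, In x l -> f x <= g x) -> Rsum (map f l) <= Rsum (map g l).
Proof. induction l; simpl; intros; [lra|]. pose proof (H a (or_introl eq_refl)). pose proof (IHl (fun x h => H x (or_intror h))). lra. Qed.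
Lemma Rsum_nonneg {A} (f : A -> R) l : (forall x, In x l -> 0 <= f x) -> 0 <= Rsum (map f l).
Proof. induction l; simpl; intros; [lra|]. pose proof (H a (or_introl eq_refl)). pose proof (IHl (fun x h => H x (or_intror h))). lra. Qed.
Lemma Rsum_ext {A} (f g : A -> R) l : (forall x, In x l -> f x = g x) -> Rsum (map f l) = Rsum (map g l).
Proof. induction l; simpl; intros; auto. rewrite H by auto. rewrite IHl; auto. Qed.
Lemma Csum_ext {A} (f g : A -> Cpx) l : (forall x, In x l -> f x = g x) -> Csum (map f l) = Csum (map g l).
Proof. induction l; simpl; intros; auto. rewrite H by auto. rewrite IHl; auto. Qed.
Lemma Rsum_plus {A} (f g : A -> R) l : Rsum (map (fun x => f x + g x) l) = Rsum (map f l) + Rsum (map g l).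
Proof. induction l; simpl; [ring|rewrite IHl; ring]. Qed.
Lemma Rsum_minus {A} (f g : A -> R) l : Rsum (map (fun x => f x - g x) l) = Rsum (map f l) - Rsum (map g l).
Proof. induction l; simpl; [ring|rewrite IHl; ring]. Qed.
Lemma Rsum_mult {A} (f : A -> R) c l : Rsum (map (fun x => c * f x) l) = c * Rsum (map f l).
Proof. induction l; simpl; [ring|rewrite IHl; ring]. Qed.
Lemma Rsum_const0 {A} (l : list A) : Rsum (map (fun _ => 0) l) = 0.
Proof. induction l; simpl; auto. rewrite IHl; ring. Qed.
Lemma Rsum_const {A} (l : list A) c : Rsum (map (fun _ => c) l) = INR (length l) * c.
Proof. induction l; [simpl; ring|]. change (length (a::l)) with (S (length l)); rewrite S_INR. simpl. rewrite IHl; ring. Qed.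
Lemma Csum_plus {A} (f g : A -> Cpx) l : Csum (map (fun x => Cadd (f x) (g x)) l) = Cadd (Csum (map f l)) (Csum (map g l)).
Proof. induction l; simpl; [unfold Cadd; simpl; f_equal; ring|rewrite IHl; unfold Cadd; simpl; f_equal; ring]. Qed.
Lemma Csum_sub {A} (f g : A -> Cpx) l : Csum (map (fun x => Csub (f x) (g x)) l) = Csub (Csum (map f l)) (Csum (map g l)).
Proof. induction l; simpl; [unfold Csub; simpl; f_equal; ring|rewrite IHl; unfold Csub, Cadd; simpl; f_equal; ring]. Qed.
Lemma Csum_mul_l {A} (f : A -> Cpx) c l : Csum (map (fun x => Cmul c (f x)) l) = Cmul c (Csum (map f l)).
Proof. induction l; simpl; [unfold Cmul; simpl; f_equal; ring|rewrite IHl; unfold Cmul, Cadd; simpl; f_equal; ring]. Qed.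
Lemma Csum_scale {A} (f : A -> Cpx) c l : Csum (map (fun x => Cscale c (f x)) l) = Cscale c (Csum (map f l)).
Proof. induction l; simpl; [unfold Cscale; simpl; f_equal; ring|rewrite IHl; unfold Cscale, Cadd; simpl; f_equal; ring]. Qed.
Lemma Csum_zero {A} (l : list A) : Csum (map (fun _ => (0,0)) l) = (0,0).
Proof. induction l; simpl; auto. rewrite IHl. unfold Cadd; simpl; f_equal; ring. Qed.
Lemma Cmod_Csum {A} (f : A -> Cpx) l : Cmod (Csum (map f l)) <= Rsum (map (fun x => Cmod (f x)) l).
Proof.
  induction l; simpl. - rewrite Cmod_00; lra.
  - eapply Rle_trans; [apply Cmod_tri|]. lra.
Qed.
Lemma Csum_fst {A} (f : A -> Cpx) l : fst (Csum (map f l)) = Rsum (map (fun x => fst (f x)) l).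
Proof. induction l; simpl; auto. rewrite IHl; auto. Qed.
Lemma Csum_real {A} (f : A -> R) l : Csum (map (fun x => (f x, 0)) l) = (Rsum (map f l), 0).
Proof. induction l; simpl; auto. rewrite IHl. unfold Cadd; simpl; f_equal; ring. Qed.
Lemma Csum_flat {A B} (f : B -> Cpx) (g : A -> list B) l :
  Csum (map f (flat_map g l)) = Csum (map (fun a => Csum (map f (g a))) l).
Proof. induction l; simpl; auto. rewrite map_app, Csum_app, IHl; auto. Qed.
Lemma Rsum_flat {A B} (f : B -> R) (g : A -> list B) l :
  Rsum (map f (flat_map g l)) = Rsum (map (fun a => Rsum (map f (g a))) l).
Proof. induction l; simpl; auto. rewrite map_app, Rsum_app, IHl; auto. Qed.
Lemma Csum_swap {A B} (f : A -> B -> Cpx) la lb :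
  Csum (map (fun a => Csum (map (fun b => f a b) lb)) la) = Csum (map (fun b => Csum (map (fun a => f a b) la)) lb).
Proof.
  induction la; simpl. - rewrite Csum_zero; auto.
  - rewrite IHla. rewrite <- Csum_plus. auto.
Qed.
Lemma Rsum_swap {A B} (f : A -> B -> R) la lb :
  Rsum (map (fun a => Rsum (map (fun b => f a b) lb)) la) = Rsum (map (fun b => Rsum (map (fun a => f a b) la)) lb).
Proof.
  induction la; simpl. - rewrite Rsum_const0; auto.
  - rewrite IHla. rewrite <- Rsum_plus. auto.
Qed.
Lemma Rsum_In_le {A} (f : A -> R) l x : (forall y, In y l -> 0 <= f y) -> In x l -> f x <= Rsum (map f l).
Proof.
  induction l; simpl; intros H Hx; [contradiction|]. destruct Hx as [->|Hin].
  - pose proof (Rsum_nonneg f l (fun y h => H y (or_intror h))). lra.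
  - pose proof (H a (or_introl eq_refl)). pose proof (IHl (fun y h => H y (or_intror h)) Hin). lra.
Qed.


Definition Ccv (u : nat -> Cpx) (L : Cpx) : Prop :=
  forall eps, 0 < eps -> exists N, forall n, (n >= N)%nat -> Cmod (Csub (u n) L) < eps.

Lemma Rlim_cv u l : Un_cv u l -> Rlim u = l.
Proof.
  intro H. unfold Rlim. destruct (excluded_middle_informative _) as [E|E].
  - destruct (constructive_indefinite_description _ E) as [l' Hl']; simpl.
    eapply UL_sequence; eauto.
  - exfalso; apply E; eauto.
Qed.

Lemma Ccv_fst u L : Ccv u L -> Un_cv (fun n => fst (u n)) (fst L).
Proof.
  intros H e He. destruct (H e He) as [N HN]. exists N; intros n Hn.
  unfold R_dist. eapply Rle_lt_trans; [|apply (HN n Hn)].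
  replace (fst (u n) - fst L) with (fst (Csub (u n) L)) by auto. apply Cmod_fst.
Qed.
Lemma Ccv_snd u L : Ccv u L -> Un_cv (fun n => snd (u n)) (snd L).
Proof.
  intros H e He. destruct (H e He) as [N HN]. exists N; intros n Hn.
  unfold R_dist. eapply Rle_lt_trans; [|apply (HN n Hn)].
  replace (snd (u n) - snd L) with (snd (Csub (u n) L)) by auto. apply Cmod_snd.
Qed.
Lemma Clim_cv u L : Ccv u L -> Clim u = L.
Proof.
  intro H. unfold Clim. rewrite (Rlim_cv _ _ (Ccv_fst _ _ H)), (Rlim_cv _ _ (Ccv_snd _ _ H)).
  destruct L; auto.
Qed.
Lemma Ccv_eventually u L : (exists N, forall n, (n >= N)%nat -> u n = L) -> Ccv u L.
Proof.
  intros [N HN] e He. exists N. intros n Hn. rewrite HN, Csub_diag, Cmod_00; auto.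
Qed.
Lemma Ccv_le a u L e : Ccv u L -> (exists N, forall n, (n >= N)%nat -> Cmod (Csub a (u n)) <= e) ->
  Cmod (Csub a L) <= e.
Proof.
  intros H [N HN]. apply Rnot_lt_le. intro Hlt.
  destruct (H _ (Rlt_Rminus _ _ Hlt)) as [N' HN'].
  specialize (HN (max N N') ltac:(lia)). specialize (HN' (max N N') ltac:(lia)).
  pose proof (Csub_tri a (u (max N N')) L). lra.
Qed.
Lemma Ccv_unique u L1 L2 : Ccv u L1 -> Ccv u L2 -> L1 = L2.
Proof. intros H1 H2. rewrite <- (Clim_cv _ _ H1), <- (Clim_cv _ _ H2). auto. Qed.

Lemma Ccauchy_cv u : (forall eps, 0 < eps -> exists N, forall n m, (n >= N)%nat -> (m >= N)%nat ->
   Cmod (Csub (u n) (u m)) < eps) -> exists L, Ccv u L.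
Proof.
  intro H.
  assert (C1: Cauchy_crit (fun n => fst (u n))).
  { intros e He. destruct (H e He) as [N HN]. exists N. intros n m Hn Hm. unfold R_dist.
    eapply Rle_lt_trans; [|apply (HN n m Hn Hm)].
    replace (fst (u n) - fst (u m)) with (fst (Csub (u n) (u m))) by auto. apply Cmod_fst. }
  assert (C2: Cauchy_crit (fun n => snd (u n))).
  { intros e He. destruct (H e He) as [N HN]. exists N. intros n m Hn Hm. unfold R_dist.
    eapply Rle_lt_trans; [|apply (HN n m Hn Hm)].
    replace (snd (u n) - snd (u m)) with (snd (Csub (u n) (u m))) by auto. apply Cmod_snd. }
  destruct (R_complete _ C1) as [l1 H1]. destruct (R_complete _ C2) as [l2 H2].
  exists (l1, l2). intros e He.
  destruct (H1 (e/2) ltac:(lra)) as [N1 HN1]. destruct (H2 (e/2) ltac:(lra)) as [N2 HN2].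
  exists (max N1 N2). intros n Hn.
  specialize (HN1 n ltac:(lia)). specialize (HN2 n ltac:(lia)). unfold R_dist in *.
  eapply Rle_lt_trans; [apply Cmod_le_sum|]. simpl. lra.
Qed.

Lemma Ccv_add u v L M : Ccv u L -> Ccv v M -> Ccv (fun n => Cadd (u n) (v n)) (Cadd L M).
Proof.
  intros H1 H2 e He. destruct (H1 (e/2) ltac:(lra)) as [N1 HN1]. destruct (H2 (e/2) ltac:(lra)) as [N2 HN2].
  exists (max N1 N2). intros n Hn. specialize (HN1 n ltac:(lia)). specialize (HN2 n ltac:(lia)).
  replace (Csub (Cadd (u n) (v n)) (Cadd L M)) with (Cadd (Csub (u n) L) (Csub (v n) M))
    by (destruct (u n), (v n), L, M; unfold Cadd, Csub; simpl; f_equal; ring).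
  eapply Rle_lt_trans; [apply Cmod_tri|]. lra.
Qed.
Lemma Ccv_mul_l c u L : Ccv u L -> Ccv (fun n => Cmul c (u n)) (Cmul c L).
Proof.
  intros H e He. destruct (H (e / (Cmod c + 1))) as [N HN].
  { apply Rdiv_lt_0_compat; auto. pose proof (Cmod_ge0 c); lra. }
  exists N. intros n Hn. specialize (HN n Hn).
  replace (Csub (Cmul c (u n)) (Cmul c L)) with (Cmul c (Csub (u n) L))
    by (destruct c, (u n), L; unfold Cmul, Csub; simpl; f_equal; ring).
  rewrite Cmod_mul. pose proof (Cmod_ge0 c). pose proof (Cmod_ge0 (Csub (u n) L)).
  apply (Rmult_lt_compat_l (Cmod c + 1)) in HN; [|lra].
  replace ((Cmod c + 1) * (e / (Cmod c + 1))) with e in HN by (field; lra). nra.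
Qed.
Lemma Ccv_scale c u L : Ccv u L -> Ccv (fun n => Cscale c (u n)) (Cscale c L).
Proof.
  intro H. replace (fun n => Cscale c (u n)) with (fun n => Cmul (c,0) (u n)).
  replace (Cscale c L) with (Cmul (c,0) L). apply Ccv_mul_l; auto.
  all: try apply functional_extensionality; intros; unfold Cmul, Cscale; simpl; f_equal; ring.
Qed.
Lemma Ccv_const L : Ccv (fun _ => L) L.
Proof. apply Ccv_eventually. exists 0%nat; auto. Qed.
Lemma Ccv_Csum {A} (l : list A) (u : A -> nat -> Cpx) (L : A -> Cpx) :
  (forall a, In a l -> Ccv (u a) (L a)) -> Ccv (fun n => Csum (map (fun a => u a n) l)) (Csum (map L l)).
Proof.
  induction l; intros H; simpl. - apply Ccv_const.
  - apply Ccv_add; [apply H; left; auto | apply IHl; intros; apply H; right; auto].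
Qed.
Lemma Ccv_ext u v L : (forall n, u n = v n) -> Ccv u L -> Ccv v L.
Proof. intros E H. replace v with u; auto. apply functional_extensionality; auto. Qed.

Lemma Rsup_spec E : bound E -> (exists x, E x) -> is_lub E (Rsup E).
Proof.
  intros Hb Hne. unfold Rsup. destruct (excluded_middle_informative _) as [H|H].
  - destruct (completeness E (proj1 H) (proj2 H)) as [s Hs]; simpl; auto.
  - exfalso; auto.
Qed.
Lemma Rsup_ub E x : bound E -> E x -> x <= Rsup E.
Proof. intros Hb Hx. destruct (Rsup_spec E Hb (ex_intro _ x Hx)) as [H _]. apply H; auto. Qed.
Lemma Rsup_le E b : (exists x, E x) -> (forall x, E x -> x <= b) -> Rsup E <= b.
Proof.
  intros Hne Hb. assert (bound E) by (exists b; intros x Hx; auto).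
  destruct (Rsup_spec E H Hne) as [_ H2]. apply H2. intros x Hx; auto.
Qed.
Lemma Rsup_approx E eps : bound E -> (exists x, E x) -> 0 < eps -> exists x, E x /\ Rsup E - eps < x.
Proof.
  intros Hb Hne He. destruct (Rsup_spec E Hb Hne) as [H1 H2].
  apply NNPP. intro Hn.
  assert (Rsup E <= Rsup E - eps).
  { apply H2. intros x Hx. apply Rnot_lt_le. intro Hlt. apply Hn. exists x; auto. }
  lra.
Qed.


Definition Rprod (l : list R) : R := fold_right Rmult 1 l.
Definition Cprod (l : list Cpx) : Cpx := fold_right Cmul (1,0) l.
Definition zapp {A B} (fs : list (A -> B)) (l : list A) : list B :=
  map (fun p => fst p (snd p)) (combine fs l).

Lemma Cadd_0_l x : Cadd (0,0) x = x.
Proof. destruct x; unfold Cadd; simpl; f_equal; ring. Qed.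
Lemma Cadd_0_r x : Cadd x (0,0) = x.
Proof. destruct x; unfold Cadd; simpl; f_equal; ring. Qed.

Lemma In_lbox {A} d (S : list A) l : In l (lbox d S) <-> length l = d /\ (forall z, In z l -> In z S).
Proof.
  revert l; induction d; intros l; simpl.
  - split. + intros [<-|[]]; split; auto; intros z [].
    + intros [H _]. destruct l; [auto|discriminate].
  - rewrite in_flat_map. split.
    + intros [z [Hz Hl]]. apply in_map_iff in Hl. destruct Hl as [l' [<- Hl']].
      apply IHd in Hl'. destruct Hl' as [H1 H2]. simpl. split; [lia|]. intros w [<-|Hw]; auto.
    + intros [H1 H2]. destruct l as [|z l']; [discriminate|]. exists z. split; [apply H2; left; auto|].
      apply in_map. apply IHd. split; [simpl in H1; lia|]. intros w Hw; apply H2; right; auto.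
Qed.

Lemma length_lbox {A} d (S : list A) : length (lbox d S) = (length S ^ d)%nat.
Proof.
  induction d; simpl; auto.
  assert (forall S', length (flat_map (fun z => map (cons z) (lbox d S)) S') = (length S' * length S ^ d)%nat).
  { induction S'; simpl; auto. rewrite length_app, length_map, IHS'. lia. }
  rewrite H. auto.
Qed.



Lemma NoDup_map_cons {A} (z : A) l : NoDup l -> NoDup (map (cons z) l).
Proof.
  induction 1; simpl; constructor; auto.
  intro Hin. apply in_map_iff in Hin. destruct Hin as [y [E Hy]]. inversion E; subst; auto.
Qed.

Lemma NoDup_flat_cons {A} (L : list (list A)) (T : list A) : NoDup L -> NoDup T ->
  NoDup (flat_map (fun z => map (cons z) L) T).
Proof.
  intros HL HT. induction HT; simpl. + constructor.
  + apply NoDup_app; auto. * apply NoDup_map_cons; auto.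
    * intros w H1 H2. apply in_map_iff in H1. destruct H1 as [l1 [<- _]].
      apply in_flat_map in H2. destruct H2 as [z [Hz H2]]. apply in_map_iff in H2.
      destruct H2 as [l2 [E _]]. inversion E; subst. auto.
Qed.
Lemma NoDup_lbox {A} d (S : list A) : NoDup S -> NoDup (lbox d S).
Proof.
  intro HS. induction d; simpl. - constructor; [intros []|constructor].
  - apply NoDup_flat_cons; auto.
Qed.

Lemma prod_sum_R {A} (S : list A) (fs : list (A -> R)) :
  Rsum (map (fun l => Rprod (zapp fs l)) (lbox (length fs) S)) = Rprod (map (fun f => Rsum (map f S)) fs).
Proof.
  induction fs as [|f fs IH]; simpl.
  - unfold Rprod; simpl. ring.
  - rewrite Rsum_flat.
    transitivity (Rsum (map (fun z => f z * Rsum (map (fun l => Rprod (zapp fs l)) (lbox (length fs) S))) S)).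
    + apply Rsum_ext. intros z _. rewrite map_map. rewrite <- Rsum_mult. auto.
    + rewrite IH. unfold Rprod at 2. simpl. fold (Rprod (map (fun f0 => Rsum (map f0 S)) fs)).
      set (c := Rprod _). rewrite (Rsum_ext _ (fun z => c * f z)) by (intros; ring).
      rewrite Rsum_mult. ring.
Qed.

Lemma prod_sum_C {A} (S : list A) (fs : list (A -> Cpx)) :
  Csum (map (fun l => Cprod (zapp fs l)) (lbox (length fs) S)) = Cprod (map (fun f => Csum (map f S)) fs).
Proof.
  induction fs as [|f fs IH]; simpl.
  - unfold Cprod; simpl. unfold Cadd; simpl. f_equal; ring.
  - rewrite Csum_flat.
    transitivity (Csum (map (fun z => Cmul (f z) (Csum (map (fun l => Cprod (zapp fs l)) (lbox (length fs) S)))) S)).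
    + apply Csum_ext. intros z _. rewrite map_map. rewrite <- Csum_mul_l. auto.
    + rewrite IH. unfold Cprod at 2. simpl. fold (Cprod (map (fun f0 => Csum (map f0 S)) fs)).
      set (c := Cprod _).
      rewrite (Csum_ext _ (fun z => Cmul c (f z))) by (intros; unfold Cmul; simpl; f_equal; ring).
      rewrite Csum_mul_l. unfold Cmul; simpl; f_equal; ring.
Qed.

Lemma sum_filter_C {A} d (S : list A) (p : A -> bool) (a : list A -> Cpx) :
  (forall l, length l = d -> (exists z, In z l /\ p z = false) -> a l = (0,0)) ->
  Csum (map a (lbox d S)) = Csum (map a (lbox d (filter p S))).
Proof.
  revert a; induction d; intros a H; simpl; auto.
  rewrite !Csum_flat.
  generalize S at 2 4 as T. intro T.
  induction T as [|z T IHT]; simpl; auto.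
  destruct (p z) eqn:Ez; simpl.
  - f_equal; auto. rewrite !map_map. apply IHd. intros l Hl [w [Hw Hp]]. apply H; simpl; auto.
    exists w; split; auto.
  - rewrite IHT. rewrite map_map.
    rewrite (Csum_ext _ (fun _ => (0,0))). rewrite Csum_zero. apply Cadd_0_l.
    intros l Hl. apply In_lbox in Hl. destruct Hl as [Hl _]. apply H; simpl; auto. exists z; simpl; auto.
Qed.

Lemma sum_filter_R {A} d (S : list A) (p : A -> bool) (a : list A -> R) :
  (forall l, length l = d -> (exists z, In z l /\ p z = false) -> a l = 0) ->
  Rsum (map a (lbox d S)) = Rsum (map a (lbox d (filter p S))).
Proof.
  revert a; induction d; intros a H; simpl; auto.
  rewrite !Rsum_flat.
  generalize S at 2 4 as T. intro T.
  induction T as [|z T IHT]; simpl; auto.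
  destruct (p z) eqn:Ez; simpl.
  - f_equal; auto. rewrite !map_map. apply IHd. intros l Hl [w [Hw Hp]]. apply H; simpl; auto.
    exists w; split; auto.
  - rewrite IHT. rewrite map_map.
    rewrite (Rsum_ext _ (fun _ => 0)). rewrite Rsum_const0. ring.
    intros l Hl. apply In_lbox in Hl. destruct Hl as [Hl _]. apply H; simpl; auto. exists z; simpl; auto.
Qed.

Lemma In_zrange N z : In z (zrange N) <-> (- Z.of_nat N <= z <= Z.of_nat N)%Z.
Proof.
  unfold zrange. rewrite in_map_iff. split.
  - intros [i [<- Hi]]. apply in_seq in Hi. lia.
  - intros H. exists (Z.to_nat (z + Z.of_nat N)). split; [lia|]. apply in_seq. lia.
Qed.



Lemma NoDup_zrange N : NoDup (zrange N).
Proof.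
  unfold zrange. apply (NoDup_map_NoDup_ForallPairs).
  - intros x y _ _ E. lia.
  - apply seq_NoDup.
Qed.

Lemma zrange_S Q : zrange (S Q) = (- Z.of_nat (S Q))%Z :: zrange Q ++ [Z.of_nat (S Q)].
Proof.
  unfold zrange. replace (2 * S Q + 1)%nat with (S (S (2 * Q + 1))) by lia.
  rewrite <- cons_seq, map_cons, seq_S, map_app, map_cons.
  apply (f_equal2 (@cons Z)); [lia|]. apply (f_equal2 (@app Z)).
  - rewrite <- seq_shift, map_map. apply map_ext. intros; lia.
  - apply (f_equal2 (@cons Z)); [lia|auto].
Qed.

Lemma filter_zrange Q Q' : (Q <= Q')%nat ->
  filter (fun z => (Z.abs z <=? Z.of_nat Q)%Z) (zrange Q') = zrange Q.
Proof.
  intro H. induction H.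
  - apply forallb_filter_id. apply forallb_forall. intros z Hz. apply In_zrange in Hz. lia.
  - rewrite zrange_S. cbn [filter]. rewrite filter_app. cbn [filter].
    replace (Z.abs (- Z.of_nat (S m)) <=? Z.of_nat Q)%Z with false by (symmetry; apply Z.leb_gt; lia).
    replace (Z.abs (Z.of_nat (S m)) <=? Z.of_nat Q)%Z with false by (symmetry; apply Z.leb_gt; lia).
    rewrite app_nil_r. auto.
Qed.

Lemma filter_false_nil {A} (f : A -> bool) l : (forall x, In x l -> f x = false) -> filter f l = [].
Proof. induction l; simpl; intros H; auto. rewrite H by auto. apply IHl; auto. Qed.

Lemma filter_seq L L' : (L <= L')%nat -> filter (fun s => s <=? L)%nat (seq 0 (S L')) = seq 0 (S L).
Proof.
  intro H. replace (S L') with (S L + (L' - L))%nat by lia. rewrite seq_app, filter_app.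
  rewrite forallb_filter_id. 2:{ apply forallb_forall. intros x Hx. apply in_seq in Hx. apply Nat.leb_le. lia. }
  replace (filter _ (seq (S L) (L' - L))) with (@nil nat). apply app_nil_r.
  symmetry. apply filter_false_nil.
  intros x Hx. apply in_seq in Hx. apply Nat.leb_gt. lia.
Qed.

Lemma Csum_delta {A} (eqd : forall x y : A, {x = y} + {x <> y}) (c : A -> Cpx) l k :
  NoDup l -> In k l -> Csum (map (fun m => if eqd m k then c m else (0,0)) l) = c k.
Proof.
  induction 1 as [|x l Hx Hl IH]; simpl; [intros []|]. intros [<-|Hin].
  - destruct (eqd x x); [|congruence].
    rewrite (Csum_ext _ (fun _ => (0,0))), Csum_zero. unfold Cadd; destruct (c x); simpl; f_equal; ring.
    intros m Hm. destruct (eqd m x); auto. subst; contradiction.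
  - destruct (eqd x k). + subst; contradiction.
    + rewrite IH; auto. unfold Cadd; destruct (c k); simpl; f_equal; ring.
Qed.


Definition upd (x : list R) (j : nat) (v : R) : list R := firstn j x ++ v :: skipn (S j) x.

Lemma length_upd x j v : (j < length x)%nat -> length (upd x j v) = length x.
Proof.
  revert x; induction j; intros [|a x] H; simpl in *; try lia; auto.
  unfold upd in *; simpl. rewrite IHj; auto; lia.
Qed.
Lemma nth_upd x j v i : (j < length x)%nat -> nth i (upd x j v) 0 = if Nat.eqb i j then v else nth i x 0.
Proof.
  revert x i; induction j; intros [|a x] i H; simpl in *; try lia.
  - unfold upd; simpl. destruct i; simpl; auto.
  - unfold upd in *; simpl. destruct i; simpl; auto. apply IHj; lia.
Qed.

Lemma dot_upd k x j v : (j < length x)%nat -> length k = length x ->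
  dot k (upd x j v) = dot k x + IZR (nth j k 0%Z) * (v - nth j x 0).
Proof.
  revert k x; induction j; intros [|z k] [|a x] H Hl; simpl in *; try lia.
  - unfold upd, dot; simpl. ring.
  - unfold upd, dot in *; simpl. rewrite IHj by lia. ring.
Qed.

Lemma dot_shift k x j : (j < length x)%nat -> length k = length x ->
  dot k (shift2pi x j) = dot k x + 2 * PI * IZR (nth j k 0%Z).
Proof.
  intros H1 H2. change (shift2pi x j) with (upd x j (nth j x 0 + 2 * PI)).
  rewrite dot_upd by auto. ring.
Qed.

Definition zabs_sum (k : list Z) : R := Rsum (map (fun z => Rabs (IZR z)) k).
Lemma zabs_sum_ge0 k : 0 <= zabs_sum k.
Proof. unfold zabs_sum. apply Rsum_nonneg. intros; apply Rabs_pos. Qed.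

Lemma dot_diff k x y delta : length x = length k -> length y = length k ->
  (forall i, (i < length k)%nat -> Rabs (nth i y 0 - nth i x 0) <= delta) ->
  Rabs (dot k y - dot k x) <= zabs_sum k * delta.
Proof.
  revert x y; induction k as [|z k IH]; intros [|a x] [|b y] Hx Hy H; simpl in *; try lia.
  - unfold dot, zabs_sum; simpl. rewrite Rminus_0_r, Rabs_R0. lra.
  - unfold dot, zabs_sum in *; simpl.
    specialize (IH x y ltac:(lia) ltac:(lia) (fun i hi => H (S i) ltac:(lia))).
    pose proof (H 0%nat ltac:(lia)) as H0; simpl in H0.
    replace (IZR z * b + Rsum (map (fun p => IZR (fst p) * snd p) (combine k y)) -
       (IZR z * a + Rsum (map (fun p => IZR (fst p) * snd p) (combine k x))))
      with (IZR z * (b - a) + (Rsum (map (fun p => IZR (fst p) * snd p) (combine k y)) -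
       Rsum (map (fun p => IZR (fst p) * snd p) (combine k x)))) by ring.
    eapply Rle_trans; [apply Rabs_triang|]. rewrite Rabs_mult.
    assert (Rabs (IZR z) * Rabs (b - a) <= Rabs (IZR z) * delta) by (apply Rmult_le_compat_l; auto using Rabs_pos).
    lra.
Qed.

(** trig polynomials *)
Definition TP := list (list Z * Cpx).
Definition tpv (P : TP) (x : list R) : Cpx := Csum (map (fun mc => Cmul (snd mc) (Cexpi (dot (fst mc) x))) P).
Definition tpok (d : nat) (P : TP) : Prop := forall mc, In mc P -> length (fst mc) = d.

Lemma tpv_bound P x : Cmod (tpv P x) <= Rsum (map (fun mc => Cmod (snd mc)) P).
Proof.
  unfold tpv. eapply Rle_trans; [apply Cmod_Csum|]. apply Rsum_le. intros mc _.
  rewrite Cmod_mul, Cmod_expi. lra.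
Qed.

Definition tpC (P : TP) : R := Rsum (map (fun mc => Cmod (snd mc) * zabs_sum (fst mc)) P).
Lemma tpC_ge0 P : 0 <= tpC P.
Proof. unfold tpC. apply Rsum_nonneg. intros. apply Rmult_le_pos; auto using Cmod_ge0, zabs_sum_ge0. Qed.

Lemma tpv_lip d P x y delta : tpok d P -> length x = d -> length y = d ->
  (forall i, (i < d)%nat -> Rabs (nth i y 0 - nth i x 0) <= delta) ->
  Cmod (Csub (tpv P y) (tpv P x)) <= tpC P * delta.
Proof.
  intros HP Hx Hy H. unfold tpv. rewrite <- Csum_sub.
  eapply Rle_trans; [apply Cmod_Csum|]. unfold tpC. rewrite Rmult_comm, <- Rsum_mult.
  apply Rsum_le. intros mc Hmc.
  replace (Csub (Cmul (snd mc) (Cexpi (dot (fst mc) y))) (Cmul (snd mc) (Cexpi (dot (fst mc) x))))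
    with (Cmul (snd mc) (Csub (Cexpi (dot (fst mc) y)) (Cexpi (dot (fst mc) x))))
    by (destruct (snd mc), (Cexpi (dot (fst mc) y)), (Cexpi (dot (fst mc) x)); unfold Cmul, Csub; simpl; f_equal; ring).
  rewrite Cmod_mul. pose proof (Cmod_ge0 (snd mc)).
  eapply Rle_trans. apply Rmult_le_compat_l; auto. apply Cexpi_lip.
  pose proof (HP mc Hmc).
  pose proof (dot_diff (fst mc) x y delta ltac:(lia) ltac:(lia) ltac:(intros i hi; apply H; lia)).
  apply (Rmult_le_compat_l (Cmod (snd mc))) in H2; auto. lra.
Qed.

Lemma tpv_periodic d P x j : tpok d P -> length x = d -> (j < d)%nat -> tpv P (shift2pi x j) = tpv P x.
Proof.
  intros HP Hx Hj. unfold tpv. apply Csum_ext. intros mc Hmc. rewrite dot_shift by (try rewrite (HP mc Hmc); lia).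
  rewrite Cexpi_2piZ. auto.
Qed.

Lemma tpv_app P Q x : tpv (P ++ Q) x = Cadd (tpv P x) (tpv Q x).
Proof. unfold tpv. rewrite map_app, Csum_app. auto. Qed.

Lemma grid_length N j : length (grid N j) = length j.
Proof. unfold grid. apply length_map. Qed.
Lemma grid_nth N j i : (i < length j)%nat -> nth i (grid N j) 0 = 2 * PI * INR (nth i j 0%nat) / INR N.
Proof.
  intro H. unfold grid. rewrite (nth_indep _ 0 ((fun ji => 2 * PI * INR ji / INR N) 0%nat)) by (rewrite length_map; auto).
  apply (map_nth (fun ji => 2 * PI * INR ji / INR N)).
Qed.
Lemma grid_in_cube d N j : In j (lbox d (seq 0 N)) -> length (grid N j) = d /\
  forall i, (i < d)%nat -> 0 <= nth i (grid N j) 0 <= 2 * PI.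
Proof.
  intro H. apply In_lbox in H. destruct H as [Hl Hin]. rewrite grid_length. split; auto.
  intros i Hi. rewrite grid_nth by lia.
  assert (In (nth i j 0%nat) (seq 0 N)) by (apply Hin, nth_In; lia).
  apply in_seq in H. pose proof PI_RGT_0.
  assert (0 < INR N) by (apply lt_0_INR; lia).
  assert (INR (nth i j 0%nat) <= INR N) by (apply le_INR; lia).
  split. - apply Rmult_le_pos; [|left; apply Rinv_0_lt_compat; auto]. apply Rmult_le_pos; [lra|apply pos_INR].
  - unfold Rdiv. apply (Rmult_le_reg_r (INR N)); auto. rewrite Rmult_assoc, Rinv_l by lra. nra.
Qed.

Definition RS (d N : nat) (f : list R -> Cpx) (k : list Z) : Cpx :=
  Cscale (/ (INR N ^ d)) (Csum (map (fun j => Cmul (f (grid N j)) (Cexpi (- dot k (grid N j)))) (lbox d (seq 0 N)))).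
Lemma fcoef_RS d f k : fcoef d f k = Clim (fun N => RS d N f k).
Proof. reflexivity. Qed.

Lemma Cscale_sub c a b : Csub (Cscale c a) (Cscale c b) = Cscale c (Csub a b).
Proof. destruct a, b; unfold Csub, Cscale; simpl; f_equal; ring. Qed.

Lemma RS_diff d N f g k e : (1 <= N)%nat ->
  (forall j, In j (lbox d (seq 0 N)) -> Cmod (Csub (f (grid N j)) (g (grid N j))) <= e) ->
  Cmod (Csub (RS d N f k) (RS d N g k)) <= e.
Proof.
  intros HN H. unfold RS.
  replace (Csub (Cscale _ _) (Cscale _ _)) with
    (Cscale (/ (INR N ^ d)) (Csum (map (fun j => Cmul (Csub (f (grid N j)) (g (grid N j))) (Cexpi (- dot k (grid N j)))) (lbox d (seq 0 N))))).
  2:{ rewrite Cscale_sub, <- Csum_sub. f_equal. apply Csum_ext. intros j _.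
      destruct (f (grid N j)), (g (grid N j)), (Cexpi (- dot k (grid N j))); unfold Cmul, Csub, Cscale; simpl; f_equal; ring. }
  rewrite Cmod_scale. assert (0 < INR N ^ d) by (apply pow_lt; apply lt_0_INR; lia).
  rewrite Rabs_right by (apply Rle_ge; left; apply Rinv_0_lt_compat; auto).
  eapply Rle_trans. apply Rmult_le_compat_l. left; apply Rinv_0_lt_compat; auto. apply Cmod_Csum.
  eapply Rle_trans. apply Rmult_le_compat_l. left; apply Rinv_0_lt_compat; auto.
  apply (Rsum_le _ (fun _ => e)). intros j Hj. rewrite Cmod_mul, Cmod_expi, Rmult_1_r. auto.
  rewrite Rsum_const, length_lbox, length_seq, pow_INR. right. field. lra.
Qed.


Lemma Cexpi_dot_map (a : list Z) (j : list nat) (g : nat -> R) :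
  Cexpi (dot a (map g j)) = Cprod (map (fun p => Cexpi (IZR (fst p) * g (snd p))) (combine a j)).
Proof.
  revert j; induction a as [|z a IH]; intros [|s j]; unfold dot; simpl; try apply Cexpi_0.
  rewrite Cexpi_add. f_equal. apply IH.
Qed.

Lemma zapp_map {A B C} (F : A -> B -> C) a j :
  zapp (map F a) j = map (fun p => F (fst p) (snd p)) (combine a j).
Proof. revert j; induction a; intros [|s j]; simpl; auto. unfold zapp in *; simpl. f_equal. apply IHa. Qed.

Definition sum1 (N : nat) (a : Z) : Cpx :=
  Csum (map (fun s => Cexpi (IZR a * (2 * PI * INR s / INR N))) (seq 0 N)).

Lemma geom_id (t : R) n :
  Cmul (Csum (map (fun s => Cexpi (INR s * t)) (seq 0 n))) (Csub (Cexpi t) (1,0)) = Csub (Cexpi (INR n * t)) (1,0).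
Proof.
  induction n.
  - simpl. rewrite Rmult_0_l, Cexpi_0. unfold Cmul, Csub; simpl; f_equal; ring.
  - rewrite seq_S, map_app, Csum_app. simpl map. simpl Csum.
    rewrite S_INR. rewrite (Rmult_plus_distr_r (INR n) 1 t), Rmult_1_l, Cexpi_add.
    revert IHn. set (A := Csum _). set (E := Cexpi (INR n * t)). set (T := Cexpi t).
    destruct A as [a1 a2], E as [e1 e2], T as [t1 t2]. unfold Cmul, Csub, Cadd; simpl.
    intro H. inversion H. f_equal; nra.
Qed.

Lemma sum1_0 N : sum1 N 0 = (INR N, 0).
Proof.
  unfold sum1. rewrite (Csum_ext _ (fun _ => (1,0))).
  2:{ intros. rewrite Rmult_0_l. apply Cexpi_0. }
  rewrite (Csum_real (fun _ => 1)). rewrite Rsum_const, length_seq. f_equal; ring.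
Qed.

Lemma sum1_nz N a : (a <> 0)%Z -> (Z.abs a < Z.of_nat N)%Z -> sum1 N a = (0,0).
Proof.
  intros Ha HN. assert (HN0: 0 < INR N) by (apply lt_0_INR; lia).
  set (t := IZR a * (2 * PI) / INR N).
  assert (E: sum1 N a = Csum (map (fun s => Cexpi (INR s * t)) (seq 0 N))).
  { unfold sum1. apply Csum_ext. intros s _. f_equal. unfold t. field. lra. }
  pose proof (geom_id t N) as G.
  assert (E2: INR N * t = 0 + 2 * PI * IZR a) by (unfold t; field; lra).
  rewrite E2, Cexpi_2piZ, Cexpi_0, Csub_diag in G.
  assert (NZ: Csub (Cexpi t) (1,0) <> (0,0)).
  { intro Hc. unfold Csub, Cexpi in Hc; simpl in Hc.
    assert (Hcos: cos t = 1) by (inversion Hc; lra).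
    assert (Hsin: sin t = 0) by (inversion Hc; lra).
    apply sin_eq_0_0 in Hsin. destruct Hsin as [k Hk].
    assert (Ha2: - INR N < IZR a < INR N).
    { rewrite INR_IZR_INZ. split; [rewrite <- opp_IZR|]; apply IZR_lt; lia. }
    assert (Ht: t * INR N = IZR a * (2 * PI)) by (unfold t; field; lra).
    pose proof PI_RGT_0.
    assert (Hb: - (2 * PI) < t < 2 * PI) by (split; nra).
    assert (Htn: t <> 0). { unfold t. intro Ht0. apply Ha. apply eq_IZR. unfold Rdiv in Ht0.
      apply Rmult_integral in Ht0. destruct Ht0 as [Ht0|Ht0]. apply Rmult_integral in Ht0. destruct Ht0; auto.
      pose proof PI_RGT_0; lra. exfalso. pose proof (Rinv_0_lt_compat _ HN0). lra. }
    rewrite Hk in Hb, Htn, Hcos.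
    assert (H3: (-2 < k < 2)%Z) by (split; apply lt_IZR; nra).
    assert (k <> 0%Z) by (intro; subst; apply Htn; ring).
    assert (k = 1 \/ k = -1)%Z as [->| ->] by lia.
    - rewrite Rmult_1_l, cos_PI in Hcos. lra.
    - replace (IZR (-1) * PI) with (- PI) in Hcos by (simpl; ring). rewrite cos_neg, cos_PI in Hcos. lra. }
  rewrite <- E in G. apply Cmod_eq0.
  assert (Cmod (Cmul (sum1 N a) (Csub (Cexpi t) (1,0))) = 0) by (rewrite G; apply Cmod_00).
  rewrite Cmod_mul in H. apply Rmult_integral in H. destruct H; auto.
  exfalso. apply NZ. apply Cmod_eq0; auto.
Qed.

Lemma Cprod_zero l : In (0,0) l -> Cprod l = (0,0).
Proof.
  induction l; simpl; intros HH; [contradiction|]. destruct HH as [H|H]. - subst. unfold Cmul; simpl; f_equal; ring.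
  - rewrite IHl by auto. unfold Cmul; simpl; f_equal; ring.
Qed.
Lemma Cprod_real l : Cprod (map (fun r => (r,0)) l) = (Rprod l, 0).
Proof. induction l; simpl; auto. rewrite IHl. unfold Cmul; simpl; f_equal; ring. Qed.

Definition allzero (a : list Z) : bool := forallb (fun z => Z.eqb z 0) a.

Lemma grid_sum d N a : length a = d -> (forall z, In z a -> (Z.abs z < Z.of_nat N)%Z) ->
  Csum (map (fun j => Cexpi (dot a (grid N j))) (lbox d (seq 0 N))) =
  if allzero a then (INR N ^ d, 0) else (0,0).
Proof.
  intros Hl Hz.
  set (fs := map (fun ai s => Cexpi (IZR ai * (2 * PI * INR s / INR N))) a).
  assert (E: forall j, Cexpi (dot a (grid N j)) = Cprod (zapp fs j)).
  { intro j. unfold grid, fs. rewrite Cexpi_dot_map, zapp_map. auto. }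
  rewrite (Csum_ext _ _ _ (fun j _ => E j)).
  replace d with (length fs) by (unfold fs; rewrite length_map; auto).
  rewrite prod_sum_C. unfold fs. rewrite map_map. fold (sum1 N).
  replace (length (map _ a)) with (length a) by (rewrite length_map; auto).
  clear E fs. subst d. induction a as [|z a IH]; simpl. - unfold Cprod; simpl. auto.
  - destruct (Z.eqb_spec z 0).
    + subst. rewrite sum1_0. simpl. rewrite IH by (intros; apply Hz; right; auto).
      destruct (allzero a); unfold Cmul; simpl; f_equal; ring.
    + rewrite sum1_nz by (auto; apply Hz; left; auto). unfold Cmul; simpl; f_equal; ring.
Qed.

Definition zsub (m k : list Z) : list Z := map (fun p => (fst p - snd p)%Z) (combine m k).

Lemma dot_zsub m k y : length m = length k -> length k = length y ->
  dot (zsub m k) y = dot m y - dot k y.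
Proof.
  revert k y; induction m; intros [|b k] [|c y] H1 H2; simpl in *; try lia; unfold dot, zsub in *; simpl; try ring.
  rewrite IHm by lia. rewrite minus_IZR. ring.
Qed.
Lemma allzero_zsub m k : length m = length k -> allzero (zsub m k) = true <-> m = k.
Proof.
  revert k; induction m; intros [|b k] H; simpl in *; try lia; unfold allzero, zsub in *; simpl.
  - split; auto.
  - rewrite Bool.andb_true_iff, IHm by lia. rewrite Z.eqb_eq. split.
    + intros [H1 H2]. f_equal; auto; lia.
    + intro E; inversion E; split; auto; lia.
Qed.

Lemma RS_expi d N m k : length m = d -> length k = d -> (1 <= N)%nat ->
  (forall p, In p (combine m k) -> (Z.abs (fst p - snd p) < Z.of_nat N)%Z) ->
  RS d N (fun x => Cexpi (dot m x)) k = if list_eq_dec Z.eq_dec m k then (1,0) else (0,0).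
Proof.
  intros Hm Hk HN Hp. unfold RS.
  rewrite (Csum_ext _ (fun j => Cexpi (dot (zsub m k) (grid N j)))).
  2:{ intros j Hj. apply In_lbox in Hj. destruct Hj as [Hj _].
      rewrite dot_zsub by (rewrite ?grid_length; lia). rewrite <- Cexpi_add. f_equal; ring. }
  rewrite grid_sum.
  - destruct (allzero (zsub m k)) eqn:Ez.
    + apply allzero_zsub in Ez; [|lia]. destruct (list_eq_dec Z.eq_dec m k); [|contradiction].
      unfold Cscale; simpl. assert (0 < INR N ^ d) by (apply pow_lt, lt_0_INR; lia). f_equal; field; lra.
    + destruct (list_eq_dec Z.eq_dec m k). * subst. assert (allzero (zsub k k) = true) by (apply allzero_zsub; auto). congruence.
      * unfold Cscale; simpl; f_equal; ring.
  - unfold zsub. rewrite length_map, length_combine. lia.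
  - intros z Hz. unfold zsub in Hz. apply in_map_iff in Hz. destruct Hz as [p [<- Hp']]. auto.
Qed.

Fixpoint zmax (m : list Z) : nat :=
  match m with [] => 0%nat | z :: m' => Nat.max (Z.to_nat (Z.abs z)) (zmax m') end.
Lemma zmax_In z m : In z m -> (Z.abs z <= Z.of_nat (zmax m))%Z.
Proof. induction m; simpl; intros HH; [contradiction|]. destruct HH as [H|H]; subst; try lia. specialize (IHm H). lia. Qed.
Definition Pmax (P : TP) : nat := fold_right (fun mc acc => Nat.max (zmax (fst mc)) acc) 0%nat P.
Lemma Pmax_In mc P : In mc P -> (zmax (fst mc) <= Pmax P)%nat.
Proof. induction P; simpl; intros HH; [contradiction|]. destruct HH as [H|H]; subst; try lia. specialize (IHP H). lia. Qed.

Lemma Csum_mul_r {A} (f : A -> Cpx) c l : Cmul (Csum (map f l)) c = Csum (map (fun x => Cmul (f x) c) l).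
Proof. induction l; simpl; [unfold Cmul; simpl; f_equal; ring|rewrite <- IHl; destruct (f a), (Csum (map f l)), c; unfold Cmul, Cadd; simpl; f_equal; ring]. Qed.

Lemma RS_tpv_lin d N P k : RS d N (tpv P) k = Csum (map (fun mc => Cmul (snd mc) (RS d N (fun x => Cexpi (dot (fst mc) x)) k)) P).
Proof.
  unfold RS, tpv.
  rewrite (Csum_ext (fun j => Cmul (Csum (map (fun mc => Cmul (snd mc) (Cexpi (dot (fst mc) (grid N j)))) P)) (Cexpi (- dot k (grid N j))))
     (fun j => Csum (map (fun mc => Cmul (snd mc) (Cmul (Cexpi (dot (fst mc) (grid N j))) (Cexpi (- dot k (grid N j))))) P))).
  2:{ intros j _. rewrite Csum_mul_r. apply Csum_ext. intros mc _.
      destruct (snd mc), (Cexpi (dot (fst mc) (grid N j))), (Cexpi (- dot k (grid N j))); unfold Cmul; simpl; f_equal; ring. }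
  rewrite Csum_swap. rewrite <- Csum_scale. apply Csum_ext. intros mc _.
  rewrite Csum_mul_l.
  destruct (snd mc), (Csum _); unfold Cmul, Cscale; simpl; f_equal; ring.
Qed.

Lemma RS_tpv d N P k : tpok d P -> length k = d -> (Pmax P + zmax k < N)%nat ->
  RS d N (tpv P) k = Csum (map (fun mc => if list_eq_dec Z.eq_dec (fst mc) k then snd mc else (0,0)) P).
Proof.
  intros HP Hk HN. rewrite RS_tpv_lin. apply Csum_ext. intros mc Hmc.
  rewrite RS_expi; auto; try lia.
  - destruct mc as [m [c1 c2]]; simpl. destruct (list_eq_dec Z.eq_dec m k); unfold Cmul; simpl; f_equal; ring.
  - intros [p1 p2] Hp. pose proof (in_combine_l _ _ _ _ Hp). pose proof (in_combine_r _ _ _ _ Hp).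
    apply zmax_In in H. apply zmax_In in H0. pose proof (Pmax_In mc P Hmc). simpl. lia.
Qed.


Lemma pow2_ge_INR n : INR n <= 2 ^ n.
Proof.
  induction n. - simpl; lra.
  - rewrite S_INR. simpl. destruct n. + simpl; lra.
    + assert (1 <= 2 ^ S n) by (apply pow_R1_Rle; lra). lra.
Qed.
Lemma exists_pow2 r : exists n, r <= 2 ^ n.
Proof.
  destruct (archimed r) as [H _].
  exists (Z.to_nat (up r)). eapply Rle_trans; [|apply pow2_ge_INR].
  destruct (Z_lt_le_dec (up r) 0).
  - replace (Z.to_nat (up r)) with 0%nat by lia. simpl. assert (IZR (up r) < 0) by (apply IZR_lt; lia). lra.
  - rewrite INR_IZR_INZ, Z2Nat.id by lia. lra.
Qed.

Lemma lt_div_pos a b c : 0 < c -> a * c < b -> a < b / c.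
Proof. intros. apply (Rmult_lt_reg_r c); auto. unfold Rdiv; rewrite Rmult_assoc, Rinv_l; lra. Qed.
Lemma abs_div_pos x c : 0 < c -> Rabs (x / c) = Rabs x / c.
Proof. intro. unfold Rdiv. rewrite Rabs_mult, (Rabs_right (/ c)); auto. apply Rle_ge; left; apply Rinv_0_lt_compat; auto. Qed.

Lemma psi_iter psi n xi : admissible psi -> psi xi <= psi (xi / 2 ^ n).
Proof.
  intros (_&_&_&Hm&_). induction n. - simpl. replace (xi / 1) with xi by field. lra.
  - specialize (Hm (xi / 2 ^ n)). replace (xi / 2 ^ n / 2) with (xi / 2 ^ S n) in Hm.
    lra. simpl. field. apply pow_nonzero; lra.
Qed.
Lemma psi_le1 psi xi : admissible psi -> psi xi <= 1.
Proof.
  intro Ha. destruct (exists_pow2 (Rabs xi)) as [n Hn].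
  pose proof (psi_iter psi n xi Ha). destruct Ha as (_&_&_&_&H1).
  assert (0 < 2 ^ n) by (apply pow_lt; lra).
  assert (Rabs (xi / 2^n) <= 1).
  { unfold Rdiv. rewrite Rabs_mult, (Rabs_right (/ 2^n)) by (apply Rle_ge; left; apply Rinv_0_lt_compat; auto).
    apply (Rmult_le_reg_r (2^n)); auto. rewrite Rmult_assoc, Rinv_l by lra. lra. }
  rewrite (H1 (xi / 2^n)) in H. lra. unfold Rabs in H2; destruct Rcase_abs; lra.
Qed.
Lemma psi_one psi xi L : admissible psi -> Rabs xi <= 2 ^ L -> psi (xi / 2 ^ L) = 1.
Proof.
  intros (_&_&_&_&H1) H. apply H1. assert (0 < 2 ^ L) by (apply pow_lt; lra).
  assert (Rabs (xi / 2^L) <= 1).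
  { unfold Rdiv. rewrite Rabs_mult, (Rabs_right (/ 2^L)) by (apply Rle_ge; left; apply Rinv_0_lt_compat; auto).
    apply (Rmult_le_reg_r (2^L)); auto. rewrite Rmult_assoc, Rinv_l by lra. lra. }
  unfold Rabs in H2; destruct Rcase_abs; lra.
Qed.
Lemma psi_zero psi xi : admissible psi -> 3/2 < Rabs xi -> psi xi = 0.
Proof. intros (_&H&_) Hx. auto. Qed.

Lemma phi_nonneg psi j xi : admissible psi -> 0 <= phi psi j xi.
Proof.
  intros Ha. pose proof Ha as (_&_&Hp&Hm&_). destruct j; simpl; auto.
  specialize (Hm (xi / 2 ^ j)). replace (xi / 2 ^ j / 2) with (xi / (2 * 2 ^ j)) in Hm. lra.
  field. apply pow_nonzero; lra.
Qed.
Lemma phi_tele psi xi L : Rsum (map (fun s => phi psi s xi) (seq 0 (S L))) = psi (xi / 2 ^ L).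
Proof.
  induction L. - simpl. replace (xi / 1) with xi by field. ring.
  - rewrite seq_S, map_app, Rsum_app, IHL. simpl. ring.
Qed.
Lemma phi_zero psi j xi : admissible psi -> 2 ^ S (S j) < Rabs xi -> phi psi j xi = 0.
Proof.
  intros Ha H. assert (0 < 2 ^ j) by (apply pow_lt; lra).
  assert (Hd: forall n, (n <= S j)%nat -> 3/2 < Rabs (xi / 2 ^ n)).
  { intros n Hn. assert (2 ^ n <= 2 ^ S j) by (apply Rle_pow; [lra|lia]).
    assert (0 < 2 ^ n) by (apply pow_lt; lra).
    rewrite abs_div_pos by auto. apply lt_div_pos; auto. simpl in *. lra. }
  destruct j; simpl.
  - apply psi_zero; auto. specialize (Hd 0%nat ltac:(lia)). simpl in Hd. replace (xi / 1) with xi in Hd by field. auto.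
  - rewrite (psi_zero psi (xi / (2 * 2 ^ j))), (psi_zero psi (xi / 2 ^ j)); auto. ring.
    all: try (apply (Hd (S j)); lia); try (apply (Hd j); lia).
Qed.

Lemma Rprod_zero l : In 0 l -> Rprod l = 0.
Proof. induction l; simpl; intros HH; [contradiction|]. unfold Rprod in *; simpl. destruct HH as [->|H]; [ring|]. rewrite IHl by auto. ring. Qed.
Lemma Rprod_nonneg l : (forall x, In x l -> 0 <= x) -> 0 <= Rprod l.
Proof. induction l; simpl; intros H; unfold Rprod in *; simpl; [lra|]. apply Rmult_le_pos; [apply H; auto|apply IHl; intros; apply H; auto]. Qed.
Lemma Rprod_le1 l : (forall x, In x l -> 0 <= x <= 1) -> Rprod l <= 1.
Proof.
  induction l; simpl; intros H; unfold Rprod in *; simpl; [lra|].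
  pose proof (H a (or_introl eq_refl)). assert (fold_right Rmult 1 l <= 1) by (apply IHl; intros; apply H; auto).
  assert (0 <= fold_right Rmult 1 l) by (apply Rprod_nonneg; intros; apply H; auto). nra.
Qed.

Lemma phiprod_nonneg psi l k : admissible psi -> 0 <= phiprod psi l k.
Proof.
  intro Ha. unfold phiprod. apply Rprod_nonneg. intros x Hx. apply in_map_iff in Hx.
  destruct Hx as [p [<- _]]. apply phi_nonneg; auto.
Qed.

Lemma in_combine_ex {A B} (l : list A) (k : list B) z : length l = length k -> In z k -> exists s, In (s, z) (combine l k).
Proof.
  revert k; induction l; intros [|b k] H Hz; simpl in *; try lia; try contradiction.
  destruct Hz as [<-|Hz]. - exists a; auto.
  - destruct (IHl k ltac:(lia) Hz) as [s Hs]. exists s; auto.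
Qed.

Lemma phiprod_zero psi l k L : admissible psi -> length l = length k -> (forall s, In s l -> (s <= L)%nat) ->
  (exists z, In z k /\ (Z.abs z <=? Z.of_nat (2 ^ S (S L)))%Z = false) -> phiprod psi l k = 0.
Proof.
  intros Ha Hl HL [z [Hz Hb]]. apply Z.leb_gt in Hb.
  destruct (in_combine_ex l k z Hl Hz) as [s Hs].
  unfold phiprod. apply Rprod_zero. apply in_map_iff. exists (s, z). split; auto. simpl.
  apply phi_zero; auto. pose proof (in_combine_l _ _ _ _ Hs). specialize (HL s H).
  assert (2 ^ S (S s) <= 2 ^ S (S L)) by (apply Rle_pow; [lra|lia]).
  rewrite <- abs_IZR. apply Rle_lt_trans with (2 ^ S (S L)); auto.
  rewrite <- (pow_INR 2) in *. replace (INR 2) with 2 in * by (simpl; ring).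
  rewrite INR_IZR_INZ. apply IZR_lt. lia.
Qed.

Lemma map_combine_swap {A B C} (g : A -> B -> C) l k :
  map (fun p => g (fst p) (snd p)) (combine l k) = map (fun p => g (snd p) (fst p)) (combine k l).
Proof. revert k; induction l; intros [|b k]; simpl; auto. f_equal. auto. Qed.

Lemma sum_phiprod psi d k L : length k = d ->
  Rsum (map (fun l => phiprod psi l k) (lbox d (seq 0 (S L)))) = Rprod (map (fun z => psi (IZR z / 2 ^ L)) k).
Proof.
  intro Hk. set (fs := map (fun z s => phi psi s (IZR z)) k).
  rewrite (Rsum_ext _ (fun l => Rprod (zapp fs l))).
  2:{ intros l _. unfold fs, phiprod. rewrite zapp_map. unfold Rprod. f_equal.
      apply (map_combine_swap (fun a b => phi psi a (IZR b))). }
  replace d with (length fs) by (unfold fs; rewrite length_map; auto).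
  rewrite prod_sum_R. unfold fs. rewrite map_map. f_equal. apply map_ext. intro z. apply phi_tele.
Qed.


Definition csum psi d g l Q x :=
  Csum (map (fun k => Cscale (phiprod psi l k) (Cmul (g k) (Cexpi (dot k x)))) (zbox d Q)).
Definition Q0 (L : nat) : nat := (2 ^ S (S L))%nat.
Definition lmax (l : list nat) : nat := fold_right Nat.max 0%nat l.
Lemma lmax_In s l : In s l -> (s <= lmax l)%nat.
Proof. induction l; simpl; intros HH; [contradiction|]. destruct HH as [->|H]; [lia|]. specialize (IHl H); lia. Qed.

Lemma Cscale_0 a : Cscale 0 a = (0,0).
Proof. unfold Cscale; f_equal; ring. Qed.

Lemma csum_stable psi d g l L Q x : admissible psi -> length l = d -> (forall s, In s l -> (s <= L)%nat) ->
  (Q0 L <= Q)%nat -> csum psi d g l Q x = csum psi d g l (Q0 L) x.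
Proof.
  intros Ha Hl HL HQ. unfold csum, zbox.
  rewrite (sum_filter_C d (zrange Q) (fun z => Z.abs z <=? Z.of_nat (Q0 L))%Z).
  - rewrite filter_zrange; auto.
  - intros k Hk Hz. rewrite (phiprod_zero psi l k L); auto. apply Cscale_0. lia.
Qed.

Lemma block_cs psi d g l L x : admissible psi -> length l = d -> (forall s, In s l -> (s <= L)%nat) ->
  block psi d g l x = csum psi d g l (Q0 L) x.
Proof.
  intros Ha Hl HL. unfold block, Zsum. apply Clim_cv. apply Ccv_eventually.
  exists (Q0 L). intros n Hn. apply csum_stable; auto.
Qed.

Definition blockTP psi d g l Q : TP := map (fun k => (k, Cscale (phiprod psi l k) (g k))) (zbox d Q).
Lemma csum_tpv psi d g l Q x : csum psi d g l Q x = tpv (blockTP psi d g l Q) x.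
Proof.
  unfold csum, tpv, blockTP. rewrite map_map. apply Csum_ext. intros k _. simpl.
  destruct (g k), (Cexpi (dot k x)); unfold Cscale, Cmul; simpl; f_equal; ring.
Qed.
Lemma zbox_len d Q k : In k (zbox d Q) -> length k = d.
Proof. unfold zbox. intro H. apply In_lbox in H. tauto. Qed.
Lemma blockTP_ok psi d g l Q : tpok d (blockTP psi d g l Q).
Proof. intros mc Hmc. unfold blockTP in Hmc. apply in_map_iff in Hmc. destruct Hmc as [k [<- Hk]]. simpl. eapply zbox_len; eauto. Qed.

Definition bb psi d g l Q := Rsum (map (fun k => phiprod psi l k * Cmod (g k)) (zbox d Q)).
Lemma csum_bound psi d g l Q x : admissible psi -> Cmod (csum psi d g l Q x) <= bb psi d g l Q.
Proof.
  intro Ha. unfold csum, bb. eapply Rle_trans; [apply Cmod_Csum|]. apply Rsum_le. intros k _.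
  rewrite Cmod_scale, Cmod_mul, Cmod_expi, Rmult_1_r, Rabs_right; [lra|]. apply Rle_ge, phiprod_nonneg; auto.
Qed.

Lemma supnorm_ub d F x : bounded_fun d F -> length x = d -> Cmod (F x) <= supnorm d F.
Proof. intros Hb Hx. unfold supnorm. apply Rsup_ub; auto. exists x; auto. Qed.
Lemma supnorm_le d F b : (forall x, length x = d -> Cmod (F x) <= b) -> supnorm d F <= b.
Proof.
  intro H. unfold supnorm. apply Rsup_le.
  - exists (Cmod (F (repeat 0 d))). exists (repeat 0 d). rewrite repeat_length; auto.
  - intros r [x [Hx ->]]. auto.
Qed.
Lemma supnorm_ge0 d F : bounded_fun d F -> 0 <= supnorm d F.
Proof.
  intro Hb. eapply Rle_trans; [apply (Cmod_ge0 (F (repeat 0 d)))|]. apply supnorm_ub; auto. apply repeat_length.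
Qed.

Lemma block_bounded psi d g l : admissible psi -> length l = d -> bounded_fun d (block psi d g l).
Proof.
  intros Ha Hl. exists (bb psi d g l (Q0 (lmax l))). intros r [x [Hx ->]].
  rewrite (block_cs psi d g l (lmax l)) by (auto; intros; apply lmax_In; auto). apply csum_bound; auto.
Qed.

Lemma box_le L l : In l (lbox (length l) (seq 0 (S L))) -> forall s, In s l -> (s <= L)%nat.
Proof. intros H s Hs. apply In_lbox in H. destruct H as [_ H]. apply H in Hs. apply in_seq in Hs. lia. Qed.
Lemma box_le' d L l : In l (lbox d (seq 0 (S L))) -> length l = d /\ forall s, In s l -> (s <= L)%nat.
Proof. intros H. pose proof H as H'. apply In_lbox in H'. destruct H' as [Hl _]. subst. split; auto. apply box_le; auto. Qed.

Lemma prod_psi_bounds psi k L : admissible psi -> 0 <= Rprod (map (fun z => psi (IZR z / 2 ^ L)) k) <= 1.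
Proof.
  intro Ha. split.
  - apply Rprod_nonneg. intros x Hx. apply in_map_iff in Hx. destruct Hx as [z [<- _]]. destruct Ha as (_&_&H&_). auto.
  - apply Rprod_le1. intros x Hx. apply in_map_iff in Hx. destruct Hx as [z [<- _]]. split.
    destruct Ha as (_&_&H&_). auto. apply psi_le1; auto.
Qed.

Lemma S_partial_le_A psi d g N : admissible psi -> (forall l, length l = d -> bounded_fun d (block psi d g l)) ->
  S_partial psi d g N <= A_partial d g (Q0 N).
Proof.
  intros Ha Hb. unfold S_partial, A_partial.
  eapply Rle_trans. apply (Rsum_le _ (fun l => bb psi d g l (Q0 N))).
  { intros l Hl. apply box_le' in Hl. destruct Hl as [Hl HL]. apply supnorm_le. intros x Hx.
    rewrite (block_cs psi d g l N); auto. apply csum_bound; auto. }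
  unfold bb. rewrite Rsum_swap.
  apply Rsum_le. intros k Hk.
  rewrite (Rsum_ext _ (fun l => Cmod (g k) * phiprod psi l k)) by (intros; ring).
  rewrite Rsum_mult, sum_phiprod by (eapply zbox_len; eauto).
  pose proof (prod_psi_bounds psi k N Ha). pose proof (Cmod_ge0 (g k)). nra.
Qed.

Lemma A_le_normA d g N : in_A d g -> A_partial d g N <= normA d g.
Proof. intro H. unfold normA. apply Rsup_ub; auto. exists N; auto. Qed.

Lemma zbox_zmax d k : length k = d -> In k (zbox d (zmax k)).
Proof.
  intro Hk. unfold zbox. apply In_lbox. split; auto. intros z Hz. apply In_zrange. pose proof (zmax_In z k Hz). lia.
Qed.

Lemma part1 psi d g : admissible psi -> in_A d g -> in_S psi d g /\ normS psi d g <= normA d g.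
Proof.
  intros Ha HA.
  assert (Hb: forall l, length l = d -> bounded_fun d (block psi d g l)) by (intros; apply block_bounded; auto).
  assert (HS: forall N, S_partial psi d g N <= normA d g).
  { intro N. eapply Rle_trans; [apply S_partial_le_A; auto|]. apply A_le_normA; auto. }
  split; [split; [|split]|].
  - exists (normA d g), 0%nat. intros k Hk. simpl. rewrite Rmult_1_r.
    eapply Rle_trans; [|apply (A_le_normA d g (zmax k) HA)]. unfold A_partial.
    apply (Rsum_In_le (fun k => Cmod (g k))). intros; apply Cmod_ge0. apply zbox_zmax; auto.
  - auto.
  - exists (normA d g). intros r [N ->]. auto.
  - unfold normS. apply Rsup_le. exists (S_partial psi d g 0); exists 0%nat; auto.
    intros r [N ->]; auto.
Qed.


Lemma sum_split_C {A} d (S : list A) p (a : list A -> Cpx) :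
  Csum (map a (lbox d S)) = Cadd (Csum (map a (lbox d (filter p S))))
     (Csum (map (fun l => if forallb p l then (0,0) else a l) (lbox d S))).
Proof.
  rewrite (Csum_ext a (fun l => Cadd (if forallb p l then a l else (0,0)) (if forallb p l then (0,0) else a l))).
  2:{ intros l _. destruct (forallb p l); [symmetry; apply Cadd_0_r|symmetry; apply Cadd_0_l]. }
  rewrite Csum_plus. f_equal.
  rewrite (sum_filter_C d S p).
  - apply Csum_ext. intros l Hl. apply In_lbox in Hl. destruct Hl as [_ Hl].
    replace (forallb p l) with true; auto. symmetry. apply forallb_forall. intros z Hz.
    apply Hl in Hz. apply filter_In in Hz. tauto.
  - intros l _ [z [Hz Hp]]. replace (forallb p l) with false; auto.
    symmetry. apply Bool.not_true_iff_false. intro H. rewrite forallb_forall in H. rewrite H in Hp; auto.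
Qed.
Lemma sum_split_R {A} d (S : list A) p (a : list A -> R) :
  Rsum (map a (lbox d S)) = Rsum (map a (lbox d (filter p S))) +
     Rsum (map (fun l => if forallb p l then 0 else a l) (lbox d S)).
Proof.
  rewrite (Rsum_ext a (fun l => (if forallb p l then a l else 0) + (if forallb p l then 0 else a l))).
  2:{ intros l _. destruct (forallb p l); ring. }
  rewrite Rsum_plus. f_equal.
  rewrite (sum_filter_R d S p).
  - apply Rsum_ext. intros l Hl. apply In_lbox in Hl. destruct Hl as [_ Hl].
    replace (forallb p l) with true; auto. symmetry. apply forallb_forall. intros z Hz.
    apply Hl in Hz. apply filter_In in Hz. tauto.
  - intros l _ [z [Hz Hp]]. replace (forallb p l) with false; auto.
    symmetry. apply Bool.not_true_iff_false. intro H. rewrite forallb_forall in H. rewrite H in Hp; auto.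
Qed.

Definition T psi d g L x := Csum (map (fun l => block psi d g l x) (lbox d (seq 0 (S L)))).

Lemma in_S_bounded psi d g : in_S psi d g -> forall l, length l = d -> bounded_fun d (block psi d g l).
Proof. intros (_&H&_). auto. Qed.

Lemma T_split psi d g L L' x : (L <= L')%nat ->
  T psi d g L' x = Cadd (T psi d g L x) (Csum (map (fun l => if forallb (fun s => s <=? L)%nat l then (0,0) else block psi d g l x) (lbox d (seq 0 (S L'))))).
Proof. intro H. unfold T. rewrite (sum_split_C d _ (fun s => s <=? L)%nat). rewrite filter_seq; auto. Qed.
Lemma S_split psi d g L L' : (L <= L')%nat ->
  S_partial psi d g L' = S_partial psi d g L + Rsum (map (fun l => if forallb (fun s => s <=? L)%nat l then 0 else supnorm d (block psi d g l)) (lbox d (seq 0 (S L')))).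
Proof. intro H. unfold S_partial. rewrite (sum_split_R d _ (fun s => s <=? L)%nat). rewrite filter_seq; auto. Qed.

Lemma lbox_len {A} d (S : list A) l : In l (lbox d S) -> length l = d.
Proof. intro H. apply In_lbox in H; tauto. Qed.

Lemma S_mono psi d g L L' : in_S psi d g -> (L <= L')%nat -> S_partial psi d g L <= S_partial psi d g L'.
Proof.
  intros HS H. rewrite (S_split psi d g L L' H). assert (0 <= Rsum (map (fun l => if forallb (fun s => s <=? L)%nat l then 0 else supnorm d (block psi d g l)) (lbox d (seq 0 (S L'))))); [|lra].
  apply Rsum_nonneg. intros l Hl. destruct forallb; [lra|]. apply supnorm_ge0. apply in_S_bounded; auto. eapply lbox_len; eauto.
Qed.

Lemma T_cauchy psi d g L L' x : in_S psi d g -> (L <= L')%nat -> length x = d ->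
  Cmod (Csub (T psi d g L' x) (T psi d g L x)) <= S_partial psi d g L' - S_partial psi d g L.
Proof.
  intros HS H Hx. rewrite (T_split psi d g L L' x H), (S_split psi d g L L' H).
  set (r := Csum _). set (s := Rsum _).
  replace (Csub (Cadd (T psi d g L x) r) (T psi d g L x)) with r
    by (destruct (T psi d g L x), r; unfold Csub, Cadd; simpl; f_equal; ring).
  replace (S_partial psi d g L + s - S_partial psi d g L) with s by ring. unfold r, s.
  eapply Rle_trans; [apply Cmod_Csum|]. apply Rsum_le. intros l Hl. destruct forallb.
  - rewrite Cmod_00; lra.
  - apply supnorm_ub; auto. apply in_S_bounded; auto. eapply lbox_len; eauto.
Qed.

Lemma T_bound psi d g L x : in_S psi d g -> length x = d -> Cmod (T psi d g L x) <= S_partial psi d g L.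
Proof.
  intros HS Hx. unfold T, S_partial. eapply Rle_trans; [apply Cmod_Csum|]. apply Rsum_le. intros l Hl.
  apply supnorm_ub; auto. apply in_S_bounded; auto. eapply lbox_len; eauto.
Qed.

Lemma S_le_normS psi d g L : in_S psi d g -> S_partial psi d g L <= normS psi d g.
Proof. intros (_&_&H). unfold normS. apply Rsup_ub; auto. exists L; auto. Qed.
Lemma normS_tail psi d g eps : in_S psi d g -> 0 < eps -> exists L0, forall L, (L >= L0)%nat -> normS psi d g - S_partial psi d g L < eps.
Proof.
  intros HS He. pose proof HS as (_&_&Hb).
  destruct (Rsup_approx _ eps Hb (ex_intro _ _ (ex_intro _ 0%nat eq_refl)) He) as [r [[L0 ->] Hr]].
  exists L0. intros L HL. pose proof (S_mono psi d g L0 L HS HL). unfold normS. lra.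
Qed.

Definition Ffun psi d g x := Clim (fun L => T psi d g L x).

Lemma F_cv psi d g x : in_S psi d g -> length x = d -> Ccv (fun L => T psi d g L x) (Ffun psi d g x).
Proof.
  intros HS Hx. destruct (Ccauchy_cv (fun L => T psi d g L x)) as [Lim H].
  - intros e He. destruct (normS_tail psi d g e HS He) as [L0 HL0]. exists L0. intros n m Hn Hm.
    destruct (le_lt_dec n m).
    + rewrite Cmod_opp_sub. eapply Rle_lt_trans; [apply T_cauchy; auto|].
      pose proof (S_le_normS psi d g m HS). specialize (HL0 n Hn). lra.
    + eapply Rle_lt_trans; [apply T_cauchy; auto; lia|].
      pose proof (S_le_normS psi d g n HS). specialize (HL0 m Hm). lra.
  - unfold Ffun. rewrite (Clim_cv _ _ H). auto.
Qed.

Lemma F_T psi d g L x : in_S psi d g -> length x = d ->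
  Cmod (Csub (T psi d g L x) (Ffun psi d g x)) <= normS psi d g - S_partial psi d g L.
Proof.
  intros HS Hx. apply (Ccv_le _ _ _ _ (F_cv psi d g x HS Hx)). exists L. intros n Hn.
  rewrite Cmod_opp_sub. eapply Rle_trans; [apply T_cauchy; auto|]. pose proof (S_le_normS psi d g n HS). lra.
Qed.

Lemma F_bound psi d g x : in_S psi d g -> length x = d -> Cmod (Ffun psi d g x) <= normS psi d g.
Proof.
  intros HS Hx. replace (Cmod (Ffun psi d g x)) with (Cmod (Csub (0,0) (Ffun psi d g x))).
  - apply (Ccv_le _ _ _ _ (F_cv psi d g x HS Hx)). exists 0%nat. intros n _.
    replace (Cmod (Csub (0,0) (T psi d g n x))) with (Cmod (T psi d g n x)).
    + eapply Rle_trans; [apply T_bound; auto|]. apply S_le_normS; auto.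
    + destruct (T psi d g n x); unfold Cmod, Csub; simpl; f_equal; ring.
  - destruct (Ffun psi d g x); unfold Cmod, Csub; simpl; f_equal; ring.
Qed.

Definition TL psi d g L : TP := map (fun k => (k, Cscale (Rprod (map (fun z => psi (IZR z / 2 ^ L)) k)) (g k))) (zbox d (Q0 L)).

Lemma Csum_scale_var {A} (f : A -> R) X l : Csum (map (fun a => Cscale (f a) X) l) = Cscale (Rsum (map f l)) X.
Proof. induction l; simpl. - unfold Cscale; f_equal; ring. - rewrite IHl. unfold Cscale, Cadd; simpl; f_equal; ring. Qed.

Lemma T_tpv psi d g L x : admissible psi -> T psi d g L x = tpv (TL psi d g L) x.
Proof.
  intro Ha. unfold T.
  rewrite (Csum_ext _ (fun l => csum psi d g l (Q0 L) x)).
  2:{ intros l Hl. apply box_le' in Hl. destruct Hl. apply block_cs; auto. }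
  unfold csum. rewrite Csum_swap. unfold tpv, TL. rewrite map_map. apply Csum_ext. intros k Hk. cbn [fst snd].
  rewrite (Csum_scale_var (fun l => phiprod psi l k)), sum_phiprod by (eapply zbox_len; eauto).
  destruct (g k), (Cexpi (dot k x)); unfold Cscale, Cmul; simpl; f_equal; ring.
Qed.
Lemma TL_ok psi d g L : tpok d (TL psi d g L).
Proof. intros mc Hmc. unfold TL in Hmc. apply in_map_iff in Hmc. destruct Hmc as [k [<- Hk]]. simpl. eapply zbox_len; eauto. Qed.

Lemma F_cont psi d g : admissible psi -> in_S psi d g -> forall x, length x = d -> forall eps, 0 < eps -> exists delta, 0 < delta /\
  forall y, length y = d -> (forall j, (j < d)%nat -> Rabs (nth j y 0 - nth j x 0) < delta) ->
  Cmod (Csub (Ffun psi d g y) (Ffun psi d g x)) < eps.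
Proof.
  intros Ha HS x Hx e He.
  destruct (normS_tail psi d g (e/3) HS ltac:(lra)) as [L HL]. specialize (HL L (le_n _)).
  pose proof (tpC_ge0 (TL psi d g L)). set (C := tpC (TL psi d g L)) in *.
  exists (e / (3 * (C + 1))). split. { apply Rdiv_lt_0_compat; lra. }
  intros y Hy Hd.
  pose proof (tpv_lip d (TL psi d g L) x y (e / (3 * (C+1))) (TL_ok psi d g L) Hx Hy ltac:(intros; left; auto)).
  rewrite <- !T_tpv in H0 by auto.
  pose proof (F_T psi d g L x HS Hx). pose proof (F_T psi d g L y HS Hy).
  rewrite Cmod_opp_sub in H2.
  pose proof (Csub_tri (Ffun psi d g y) (T psi d g L y) (Ffun psi d g x)).
  pose proof (Csub_tri (T psi d g L y) (T psi d g L x) (Ffun psi d g x)).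
  assert (C * (e / (3 * (C + 1))) <= e / 3).
  { unfold Rdiv. rewrite Rinv_mult. assert (0 < / (C+1)) by (apply Rinv_0_lt_compat; lra).
    assert (C * / (C+1) <= 1) by (apply (Rmult_le_reg_r (C+1)); [lra|]; rewrite Rmult_assoc, Rinv_l by lra; lra).
    assert (0 < e * / 3) by lra. nra. }
  change (tpC (TL psi d g L)) with C in H0. lra.
Qed.

Lemma F_periodic psi d g x j : admissible psi -> length x = d -> (j < d)%nat -> Ffun psi d g (shift2pi x j) = Ffun psi d g x.
Proof.
  intros Ha Hx Hj. unfold Ffun. f_equal. apply functional_extensionality. intro L.
  rewrite !T_tpv by auto. apply (tpv_periodic d); auto. apply TL_ok.
Qed.

Lemma Rprod_one l : (forall r, In r l -> r = 1) -> Rprod l = 1.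
Proof. induction l; simpl; intros H; unfold Rprod in *; simpl; auto. rewrite IHl, (H a) by auto. ring. Qed.

Lemma F_coef_cv psi d g k : admissible psi -> in_S psi d g -> length k = d ->
  Ccv (fun N => RS d N (Ffun psi d g) k) (g k).
Proof.
  intros Ha HS Hk e He.
  destruct (normS_tail psi d g (e/2) HS ltac:(lra)) as [L0 HL0].
  set (L := Nat.max L0 (zmax k)). specialize (HL0 L ltac:(lia)).
  exists (S (Pmax (TL psi d g L) + zmax k)). intros N HN.
  assert (E: RS d N (T psi d g L) k = g k).
  { replace (T psi d g L) with (tpv (TL psi d g L)) by (apply functional_extensionality; intro; rewrite T_tpv; auto).
    rewrite (RS_tpv d); auto; try apply TL_ok; try lia.
    unfold TL. rewrite map_map. cbn [fst snd].
    rewrite (Csum_delta (list_eq_dec Z.eq_dec) (fun m => Cscale (Rprod (map (fun z => psi (IZR z / 2 ^ L)) m)) (g m))).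
    - rewrite (Rprod_one); [destruct (g k); unfold Cscale; simpl; f_equal; ring|].
      intros r Hr. apply in_map_iff in Hr. destruct Hr as [z [<- Hz]]. apply psi_one; auto.
      pose proof (zmax_In z k Hz). rewrite <- abs_IZR.
      eapply Rle_trans; [|apply pow2_ge_INR]. rewrite INR_IZR_INZ. apply IZR_le. lia.
    - unfold zbox. apply NoDup_lbox, NoDup_zrange.
    - unfold zbox. apply In_lbox. split; auto. intros z Hz. apply In_zrange. pose proof (zmax_In z k Hz).
      unfold Q0. assert (S (S L) < 2 ^ S (S L))%nat by (apply Nat.pow_gt_lin_r; lia). lia. }
  rewrite <- E. rewrite Cmod_opp_sub.
  eapply Rle_lt_trans. apply RS_diff; [lia|].
  intros j Hj. destruct (grid_in_cube d N j Hj) as [Hl _]. apply F_T; auto. lra.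
Qed.

Lemma part3 psi d g : admissible psi -> in_S psi d g ->
  contT d (Ffun psi d g) /\ (forall k, length k = d -> fcoef d (Ffun psi d g) k = g k) /\
  supnorm d (Ffun psi d g) <= normS psi d g.
Proof.
  intros Ha HS. split; [split|split].
  - apply F_cont; auto.
  - intros. apply F_periodic; auto.
  - intros k Hk. rewrite fcoef_RS. apply Clim_cv. apply F_coef_cv; auto.
  - apply supnorm_le. intros. apply F_bound; auto.
Qed.


Lemma nth_map_seq (F : nat -> R) d i : (i < d)%nat -> nth i (map F (seq 0 d)) 0 = F i.
Proof.
  intro H. rewrite (nth_indep _ 0 (F 0%nat)) by (rewrite length_map, length_seq; auto).
  rewrite map_nth, seq_nth; auto.
Qed.

Definition zshift (d : nat) (x : list R) (n : nat -> Z) : list R :=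
  map (fun i => nth i x 0 + 2 * PI * IZR (n i)) (seq 0 d).
Lemma zshift_length d x n : length (zshift d x n) = d.
Proof. unfold zshift. rewrite length_map, length_seq; auto. Qed.
Lemma zshift_nth d x n i : (i < d)%nat -> nth i (zshift d x n) 0 = nth i x 0 + 2 * PI * IZR (n i).
Proof. intro H. unfold zshift. apply (nth_map_seq (fun i => nth i x 0 + 2 * PI * IZR (n i))); auto. Qed.

Lemma upd_same x j : (j < length x)%nat -> upd x j (nth j x 0) = x.
Proof.
  intro H. apply nth_ext with 0 0. rewrite length_upd; auto.
  intros i Hi. rewrite length_upd in Hi by auto. rewrite nth_upd by auto. destruct (Nat.eqb_spec i j); subst; auto.
Qed.
Lemma upd_upd x j v w : (j < length x)%nat -> upd (upd x j v) j w = upd x j w.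
Proof.
  intro H. apply nth_ext with 0 0. rewrite !length_upd; auto. rewrite length_upd; auto.
  intros i Hi. rewrite !length_upd in Hi by (try rewrite length_upd; auto).
  rewrite !nth_upd; try rewrite length_upd; auto. destruct (Nat.eqb i j); auto.
Qed.
Lemma nth_upd_eq x j v : (j < length x)%nat -> nth j (upd x j v) 0 = v.
Proof. intro H. rewrite nth_upd by auto. rewrite Nat.eqb_refl. auto. Qed.

Lemma per_pos d f x j m : contT d f -> length x = d -> (j < d)%nat ->
  f (upd x j (nth j x 0 + 2 * PI * INR m)) = f x.
Proof.
  intros [_ Hp] Hx Hj. induction m.
  - simpl. rewrite Rmult_0_r, Rplus_0_r, upd_same by lia. auto.
  - rewrite <- IHm. set (y := upd x j (nth j x 0 + 2 * PI * INR m)).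
    assert (Hy: length y = d) by (unfold y; rewrite length_upd; lia).
    rewrite <- (Hp y j Hy Hj). unfold shift2pi. fold (upd y j (nth j y 0 + 2 * PI)).
    unfold y. rewrite nth_upd_eq, upd_upd by lia. rewrite S_INR. f_equal. f_equal. ring.
Qed.
Lemma per_neg d f x j m : contT d f -> length x = d -> (j < d)%nat ->
  f (upd x j (nth j x 0 - 2 * PI * INR m)) = f x.
Proof.
  intros Hc Hx Hj. pose proof Hc as [_ Hp]. induction m.
  - simpl. rewrite Rmult_0_r, Rminus_0_r, upd_same by lia. auto.
  - rewrite <- IHm. set (y := upd x j (nth j x 0 - 2 * PI * INR (S m))).
    assert (Hy: length y = d) by (unfold y; rewrite length_upd; lia).
    rewrite <- (Hp y j Hy Hj). unfold shift2pi. fold (upd y j (nth j y 0 + 2 * PI)).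
    unfold y. rewrite nth_upd_eq, upd_upd by lia. rewrite S_INR. f_equal. f_equal. ring.
Qed.
Lemma per_Z d f x j n : contT d f -> length x = d -> (j < d)%nat ->
  f (upd x j (nth j x 0 + 2 * PI * IZR n)) = f x.
Proof.
  intros Hc Hx Hj. destruct (Z_le_gt_dec 0 n).
  - replace (IZR n) with (INR (Z.to_nat n)) by (rewrite INR_IZR_INZ, Z2Nat.id; auto). apply (per_pos d); auto.
  - replace (nth j x 0 + 2 * PI * IZR n) with (nth j x 0 - 2 * PI * INR (Z.to_nat (- n))).
    apply (per_neg d); auto. rewrite INR_IZR_INZ, Z2Nat.id by lia. rewrite opp_IZR. ring.
Qed.

Lemma per_vec d f x n : contT d f -> length x = d -> f (zshift d x n) = f x.
Proof.
  intros Hc Hx.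
  set (y := fun m => map (fun i => nth i x 0 + (if (i <? m)%nat then 2 * PI * IZR (n i) else 0)) (seq 0 d)).
  assert (Hyl: forall m, length (y m) = d) by (intro; unfold y; rewrite length_map, length_seq; auto).
  assert (Hyn: forall m i, (i < d)%nat -> nth i (y m) 0 = nth i x 0 + (if (i <? m)%nat then 2 * PI * IZR (n i) else 0)).
  { intros m i Hi. unfold y. apply (nth_map_seq (fun i => nth i x 0 + (if (i <? m)%nat then 2 * PI * IZR (n i) else 0))); auto. }
  assert (H0: y 0%nat = x).
  { apply nth_ext with 0 0. rewrite Hyl; lia. intros i Hi. rewrite Hyl in Hi. rewrite Hyn by auto. simpl. ring. }
  assert (Hd: y d = zshift d x n).
  { apply nth_ext with 0 0. rewrite Hyl, zshift_length; auto. intros i Hi. rewrite Hyl in Hi.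
    rewrite Hyn, zshift_nth by auto. replace (i <? d)%nat with true by (symmetry; apply Nat.ltb_lt; auto). auto. }
  assert (Hstep: forall m, (m < d)%nat -> f (y (S m)) = f (y m)).
  { intros m Hm. rewrite <- (per_Z d f (y m) m (n m)) by auto. f_equal.
    apply nth_ext with 0 0. rewrite Hyl, length_upd by (rewrite Hyl; lia). rewrite Hyl; lia.
    intros i Hi. rewrite Hyl in Hi. rewrite nth_upd by (rewrite Hyl; lia). rewrite !Hyn by auto.
    destruct (Nat.eqb_spec i m).
    - subst i. replace (m <? S m)%nat with true by (symmetry; apply Nat.ltb_lt; lia).
      replace (m <? m)%nat with false by (symmetry; apply Nat.ltb_ge; lia). ring.
    - destruct (Nat.ltb_spec i (S m)); destruct (Nat.ltb_spec i m); try lia; auto. }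
  rewrite <- Hd. transitivity (f (y 0%nat)); [|rewrite H0; auto].
  assert (forall m, (m <= d)%nat -> f (y m) = f (y 0%nat)).
  { induction m; intros Hm; auto. rewrite Hstep by lia. apply IHm; lia. }
  apply H; lia.
Qed.

Definition in_cube (d : nat) (x : list R) : Prop := length x = d /\ forall i, (i < d)%nat -> 0 <= nth i x 0 <= 2 * PI.

Lemma reduce_cube d x : length x = d -> exists n, in_cube d (zshift d x n).
Proof.
  intro Hx. exists (fun i => Z.opp (Zfloor (nth i x 0 / (2 * PI)))). split; [apply zshift_length|].
  intros i Hi. rewrite zshift_nth by auto. rewrite opp_IZR.
  pose proof (Zfloor_bound (nth i x 0 / (2 * PI))). pose proof PI_RGT_0.
  set (r := nth i x 0) in *. set (fl := IZR (Zfloor (r / (2 * PI)))) in *.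
  assert (E: r = (r / (2 * PI)) * (2 * PI)) by (field; lra).
  split; nra.
Qed.


Definition box := ((nat -> R) * (nat -> R))%type.
Definition inbox (d : nat) (aw : box) (x : list R) : Prop :=
  length x = d /\ forall i, (i < d)%nat -> fst aw i <= nth i x 0 <= fst aw i + snd aw i.
Definition Good (d : nat) (f : list R -> Cpx) (e : R) (aw : box) : Prop :=
  exists delta, 0 < delta /\ forall x, inbox d aw x -> forall y, length y = d ->
    (forall i, (i < d)%nat -> Rabs (nth i y 0 - nth i x 0) < delta) -> Cmod (Csub (f y) (f x)) < e.
Definition fupd (h : nat -> R) (i : nat) (v : R) : nat -> R := fun j => if Nat.eqb j i then v else h j.
Definition lefth (i : nat) (aw : box) : box := (fst aw, fupd (snd aw) i (snd aw i / 2)).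
Definition righth (i : nat) (aw : box) : box :=
  (fupd (fst aw) i (fst aw i + snd aw i / 2), fupd (snd aw) i (snd aw i / 2)).

Lemma good_split d f e i aw : Good d f e (lefth i aw) -> Good d f e (righth i aw) -> Good d f e aw.
Proof.
  intros [d1 [Hd1 H1]] [d2 [Hd2 H2]]. exists (Rmin d1 d2). split; [apply Rmin_pos; auto|].
  intros x [Hx Hb] y Hy Hyx.
  destruct (Rle_dec (nth i x 0) (fst aw i + snd aw i / 2)).
  - apply H1; auto. + split; auto. intros j Hj. unfold lefth, fupd; simpl. specialize (Hb j Hj).
      destruct (Nat.eqb_spec j i); [subst; lra|auto].
    + intros j Hj. eapply Rlt_le_trans; [apply Hyx; auto|apply Rmin_l].
  - apply H2; auto. + split; auto. intros j Hj. unfold righth, fupd; simpl. specialize (Hb j Hj).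
      destruct (Nat.eqb_spec j i); [subst; lra|auto].
    + intros j Hj. eapply Rlt_le_trans; [apply Hyx; auto|apply Rmin_r].
Qed.

Definition choose (d : nat) (f : list R -> Cpx) (e : R) (aw : box) (i : nat) : box :=
  if excluded_middle_informative (Good d f e (lefth i aw)) then righth i aw else lefth i aw.

Lemma choose_bad d f e aw i : ~ Good d f e aw -> ~ Good d f e (choose d f e aw i).
Proof.
  intros H. unfold choose. destruct (excluded_middle_informative _) as [G|G]; auto.
  intro G2. apply H. eapply good_split; eauto.
Qed.

Lemma choose_prop d f e aw i : (forall j, 0 <= snd aw j) ->
  let aw' := choose d f e aw i in
  (forall j, j <> i -> snd aw' j = snd aw j /\ fst aw' j = fst aw j) /\
  snd aw' i = snd aw i / 2 /\ fst aw i <= fst aw' i /\ fst aw' i + snd aw' i <= fst aw i + snd aw i.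
Proof.
  intros Hw aw'. unfold aw', choose. specialize (Hw i).
  destruct (excluded_middle_informative _); unfold righth, lefth, fupd; simpl;
    rewrite Nat.eqb_refl; (split; [intros j Hj; apply Nat.eqb_neq in Hj; rewrite Hj; auto|]); lra.
Qed.

Definition round (d : nat) (f : list R -> Cpx) (e : R) (aw : box) : box :=
  fold_left (choose d f e) (seq 0 d) aw.

Lemma fold_bad d f e Ls aw : ~ Good d f e aw -> ~ Good d f e (fold_left (choose d f e) Ls aw).
Proof. revert aw; induction Ls; intros aw H; simpl; auto. apply IHLs. apply choose_bad; auto. Qed.

Lemma fold_inv d f e Ls aw : NoDup Ls -> (forall j, 0 <= snd aw j) ->
  let aw' := fold_left (choose d f e) Ls aw in
  (forall j, 0 <= snd aw' j) /\
  forall i, (In i Ls -> snd aw' i = snd aw i / 2 /\ fst aw i <= fst aw' i /\ fst aw' i + snd aw' i <= fst aw i + snd aw i) /\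
    (~ In i Ls -> snd aw' i = snd aw i /\ fst aw' i = fst aw i).
Proof.
  revert aw; induction Ls as [|i Ls IH]; intros aw HN Hw aw'; simpl in aw'.
  - split; auto. intros i. split; [intros []|auto].
  - inversion HN as [|? ? Hni HNL]; subst.
    pose proof (choose_prop d f e aw i Hw) as (Co & C1 & C2 & C3).
    set (aw1 := choose d f e aw i) in *.
    assert (Hw1: forall j, 0 <= snd aw1 j).
    { intro j. destruct (Nat.eq_dec j i). subst; rewrite C1; specialize (Hw i); lra. rewrite (proj1 (Co j n)); auto. }
    destruct (IH aw1 HNL Hw1) as [IHw IHi]. fold aw' in IHw, IHi. split; auto.
    intro j. destruct (IHi j) as [IHin IHout]. split.
    + intros [<-|Hj].
      * destruct (IHout Hni) as [E1 E2]. rewrite E1, E2. split; [auto|split; auto].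
      * assert (j <> i) by (intro; subst; contradiction).
        destruct (Co j H) as [E1 E2]. destruct (IHin Hj) as (F1 & F2 & F3). rewrite E1, E2 in *.
        split; auto.
    + intros Hj. assert (j <> i) by (intro; subst; apply Hj; left; auto).
      assert (~ In j Ls) by (intro; apply Hj; right; auto).
      destruct (Co j H) as [E1 E2]. destruct (IHout H0) as [F1 F2]. rewrite F1, F2, E1, E2. auto.
Qed.

Definition a0 : nat -> R := fun _ => 0.
Definition w0 : nat -> R := fun _ => 2 * PI.
Definition bx (d : nat) (f : list R -> Cpx) (e : R) (n : nat) : box := Nat.iter n (round d f e) (a0, w0).

Lemma bx_props d f e n : (forall j, 0 <= snd (bx d f e n) j) /\
  (forall i, (i < d)%nat -> snd (bx d f e n) i = 2 * PI / 2 ^ n) /\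
  (forall i, fst (bx d f e n) i <= fst (bx d f e (S n)) i /\
     fst (bx d f e (S n)) i + snd (bx d f e (S n)) i <= fst (bx d f e n) i + snd (bx d f e n) i).
Proof.
  induction n as [|n IH].
  - pose proof PI_RGT_0.
    pose proof (fold_inv d f e (seq 0 d) (a0, w0) (seq_NoDup _ _) ltac:(intro; unfold w0; simpl; lra)) as [_ Hi].
    split; [intro; simpl; unfold w0; lra|]. split; [intros; simpl; unfold w0; field|].
    intros i. change (bx d f e 1) with (round d f e (a0, w0)). unfold round. simpl fst; simpl snd.
    destruct (Hi i) as [Hin Hout]. destruct (in_dec Nat.eq_dec i (seq 0 d)).
    + destruct (Hin i0) as (_&H1&H2). simpl in *. split; [exact H1|exact H2].
    + destruct (Hout n) as [H1 H2]. simpl in *. rewrite H1, H2. lra.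
  - destruct IH as (Hw & Hs & Hm).
    change (bx d f e (S n)) with (round d f e (bx d f e n)).
    pose proof (fold_inv d f e (seq 0 d) (bx d f e n) (seq_NoDup _ _) Hw) as [Hw' Hi].
    fold (round d f e (bx d f e n)) in Hw', Hi.
    split; auto. split.
    + intros i Hid. destruct (Hi i) as [Hin _]. assert (Hii: In i (seq 0 d)) by (apply in_seq; lia).
      destruct (Hin Hii) as (H1&_).
      rewrite H1, Hs by auto. simpl. field. apply pow_nonzero; lra.
    + intro i. change (bx d f e (S (S n))) with (round d f e (round d f e (bx d f e n))).
      pose proof (fold_inv d f e (seq 0 d) (round d f e (bx d f e n)) (seq_NoDup _ _) Hw') as [_ Hi2].
      fold (round d f e (round d f e (bx d f e n))) in Hi2.
      destruct (Hi2 i) as [Hin Hout]. destruct (in_dec Nat.eq_dec i (seq 0 d)).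
      * destruct (Hin i0) as (_&H1&H2). split; [exact H1|exact H2].
      * destruct (Hout n0) as [H1 H2]. rewrite H1, H2. lra.
Qed.

Lemma cv_le_bound u l b n : Un_cv u l -> (forall m, (m >= n)%nat -> u m <= b) -> l <= b.
Proof.
  intros Hu Hb. apply Rnot_lt_le. intro Hlt. destruct (Hu (l - b) ltac:(lra)) as [N HN].
  specialize (HN (max N n) ltac:(lia)). specialize (Hb (max N n) ltac:(lia)). unfold R_dist in HN.
  unfold Rabs in HN; destruct Rcase_abs in HN; lra.
Qed.

Lemma UC_cube d f : contT d f -> forall eps, 0 < eps -> exists delta, 0 < delta /\
  forall x, in_cube d x -> forall y, length y = d -> (forall i, (i < d)%nat -> Rabs (nth i y 0 - nth i x 0) < delta) ->
  Cmod (Csub (f y) (f x)) < eps.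
Proof.
  intros [Hc _] e He.
  assert (G: Good d f e (a0, w0)).
  2:{ destruct G as [delta [Hd H]]. exists delta. split; auto. intros x [Hx Hb] y Hy Hyx. apply H; auto.
      split; auto. intros i Hi. unfold a0, w0; simpl. specialize (Hb i Hi). lra. }
  apply NNPP. intro Hbad.
  assert (Hbadn: forall n, ~ Good d f e (bx d f e n)).
  { induction n; auto. simpl. unfold round. apply fold_bad. auto. }
  set (a := fun n i => fst (bx d f e n) i).
  assert (Hgrow: forall i, Un_growing (fun n => a n i)).
  { intros i n. unfold a. apply (proj2 (proj2 (bx_props d f e n)) i). }
  assert (Hsum: forall i n m, (n <= m)%nat -> a m i + snd (bx d f e m) i <= a n i + snd (bx d f e n) i).
  { intros i n m Hnm. induction Hnm; [lra|]. pose proof (proj2 (proj2 (proj2 (bx_props d f e m)) i)). unfold a in *. lra. }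
  assert (Hub: forall i, has_ub (fun n => a n i)).
  { intro i. exists (2 * PI). intros r [n ->]. pose proof (Hsum i 0%nat n ltac:(lia)).
    pose proof (proj1 (bx_props d f e n) i). unfold a in *. simpl in H. unfold a0, w0 in H. lra. }
  set (zi := fun i => proj1_sig (growing_cv _ (Hgrow i) (Hub i))).
  assert (Hz: forall i, Un_cv (fun n => a n i) (zi i)).
  { intro i. unfold zi. destruct (growing_cv _ _ _); auto. }
  assert (Hzb: forall i n, a n i <= zi i <= a n i + snd (bx d f e n) i).
  { intros i n. split. - apply (growing_ineq _ _ (Hgrow i) (Hz i)).
    - apply (cv_le_bound _ _ _ n (Hz i)). intros m Hm. pose proof (Hsum i n m Hm).
      pose proof (proj1 (bx_props d f e m) i). lra. }
  set (z := map zi (seq 0 d)).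
  assert (Hzl: length z = d) by (unfold z; rewrite length_map, length_seq; auto).
  assert (Hzn: forall i, (i < d)%nat -> nth i z 0 = zi i) by (intros; unfold z; apply (nth_map_seq zi); auto).
  destruct (Hc z Hzl (e/2) ltac:(lra)) as [dz [Hdz Hcz]].
  destruct (cv_pow_half (2 * PI) (dz/2) ltac:(lra)) as [n Hn]. specialize (Hn n (le_n _)).
  unfold R_dist in Hn. rewrite Rminus_0_r in Hn.
  assert (Hwn: 2 * PI / 2 ^ n < dz / 2).
  { eapply Rle_lt_trans; [apply Rle_abs|apply Hn]. }
  apply (Hbadn n). exists (dz/2). split; [lra|].
  intros x [Hx Hb] y Hy Hyx.
  assert (Hxz: forall i, (i < d)%nat -> Rabs (nth i x 0 - nth i z 0) < dz/2).
  { intros i Hi. rewrite Hzn by auto. specialize (Hb i Hi). specialize (Hzb i n).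
    rewrite (proj1 (proj2 (bx_props d f e n)) i Hi) in Hb, Hzb. unfold a in Hzb.
    unfold Rabs; destruct Rcase_abs; lra. }
  assert (H1: Cmod (Csub (f y) (f z)) < e/2).
  { apply Hcz; auto. intros i Hi. specialize (Hxz i Hi). specialize (Hyx i Hi).
    replace (nth i y 0 - nth i z 0) with ((nth i y 0 - nth i x 0) + (nth i x 0 - nth i z 0)) by ring.
    eapply Rle_lt_trans; [apply Rabs_triang|]. lra. }
  assert (H2: Cmod (Csub (f x) (f z)) < e/2).
  { apply Hcz; auto. intros i Hi. specialize (Hxz i Hi). lra. }
  pose proof (Csub_tri (f y) (f z) (f x)). rewrite Cmod_opp_sub in H2. lra.
Qed.


Lemma div_nonneg a b : 0 <= a -> 0 < b -> 0 <= a / b.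
Proof. intros. unfold Rdiv. apply Rmult_le_pos; auto. left; apply Rinv_0_lt_compat; auto. Qed.
Lemma div_le1 a b : a <= b -> 0 < b -> a / b <= 1.
Proof. intros. apply (Rmult_le_reg_r b); auto. unfold Rdiv. rewrite Rmult_assoc, Rinv_l by lra. lra. Qed.

Lemma UCP d f : contT d f -> forall eps, 0 < eps -> exists delta, 0 < delta /\ delta <= 1 /\
  forall x, in_cube d x -> forall y, length y = d ->
  (forall i, (i < d)%nat -> exists n : Z, Rabs (nth i y 0 - nth i x 0 - 2 * PI * IZR n) < delta) ->
  Cmod (Csub (f y) (f x)) < eps.
Proof.
  intros Hc e He. destruct (UC_cube d f Hc e He) as [delta [Hd H]].
  exists (Rmin delta 1). split; [apply Rmin_pos; lra|]. split; [apply Rmin_r|].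
  intros x Hx y Hy Hn.
  assert (H': forall i, exists n : Z, (i < d)%nat -> Rabs (nth i y 0 - nth i x 0 - 2 * PI * IZR n) < Rmin delta 1).
  { intro i. destruct (lt_dec i d) as [Hi|Hi].
    - destruct (Hn i Hi) as [n Hn']. exists n; auto.
    - exists 0%Z. intro; lia. }
  set (nf := fun i => proj1_sig (constructive_indefinite_description _ (H' i))).
  assert (Hnf: forall i, (i < d)%nat -> Rabs (nth i y 0 - nth i x 0 - 2 * PI * IZR (nf i)) < Rmin delta 1).
  { intros i Hi. unfold nf. destruct (constructive_indefinite_description _ _); simpl; auto. }
  rewrite <- (per_vec d f y (fun i => Z.opp (nf i))) by auto.
  apply H; auto. apply zshift_length. intros i Hi. rewrite zshift_nth by auto. rewrite opp_IZR.
  specialize (Hnf i Hi). pose proof (Rmin_l delta 1).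
  replace (nth i y 0 + 2 * PI * - IZR (nf i) - nth i x 0) with (nth i y 0 - nth i x 0 - 2 * PI * IZR (nf i)) by ring.
  lra.
Qed.

Lemma cube_bound d f : contT d f -> exists B, 0 <= B /\ forall x, in_cube d x -> Cmod (f x) <= B.
Proof.
  intros Hc. destruct (UC_cube d f Hc 1 ltac:(lra)) as [delta [Hd H]].
  pose proof PI_RGT_0.
  destruct (archimed (2 * PI / delta)) as [Ha _].
  set (K := S (Z.to_nat (up (2 * PI / delta)))).
  assert (HK: 2 * PI < delta * INR K).
  { assert (2 * PI / delta < INR K).
    { unfold K. rewrite S_INR. destruct (Z_lt_le_dec (up (2 * PI / delta)) 0).
      - replace (Z.to_nat _) with 0%nat by lia. simpl.
        assert (0 < 2 * PI / delta) by (apply Rdiv_lt_0_compat; lra). assert (IZR (up (2*PI/delta)) < 0) by (apply IZR_lt; lia). lra.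
      - rewrite INR_IZR_INZ, Z2Nat.id by lia. lra. }
    apply (Rmult_lt_compat_l delta) in H1; auto. unfold Rdiv in H1.
    rewrite <- Rmult_assoc, (Rmult_comm delta), Rmult_assoc, Rinv_r, Rmult_1_r in H1 by lra. lra. }
  assert (HK0: 0 < INR K) by (unfold K; apply lt_0_INR; lia).
  set (z0 := map (fun _ : nat => 0) (seq 0 d)).
  exists (Cmod (f z0) + INR K). split. { pose proof (Cmod_ge0 (f z0)). lra. }
  intros x [Hx Hb].
  set (zm := fun m : nat => map (fun i => INR m / INR K * nth i x 0) (seq 0 d)).
  assert (Hzl: forall m, length (zm m) = d) by (intro; unfold zm; rewrite length_map, length_seq; auto).
  assert (Hzn: forall m i, (i < d)%nat -> nth i (zm m) 0 = INR m / INR K * nth i x 0).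
  { intros m i Hi. unfold zm. apply (nth_map_seq (fun i => INR m / INR K * nth i x 0)); auto. }
  assert (E0: zm 0%nat = z0). { unfold zm, z0. apply map_ext. intros. simpl. unfold Rdiv. ring. }
  assert (EK: zm K = x).
  { apply nth_ext with 0 0. rewrite Hzl; auto. intros i Hi. rewrite Hzl in Hi. rewrite Hzn by auto. field. lra. }
  assert (Hstep: forall m, (m < K)%nat -> Cmod (f (zm (S m))) <= Cmod (f (zm m)) + 1).
  { intros m Hm. assert (Cmod (Csub (f (zm (S m))) (f (zm m))) < 1).
    { apply H; auto.
      - split; auto. intros i Hi. rewrite Hzn by auto. specialize (Hb i Hi).
        assert (INR m <= INR K) by (apply le_INR; lia). assert (0 <= INR m) by apply pos_INR.
        assert (0 <= INR m / INR K <= 1) by (split; [apply div_nonneg; lra|apply div_le1; lra]).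
        split; nra.
      - intros i Hi. rewrite !Hzn by auto. rewrite S_INR. specialize (Hb i Hi).
        replace ((INR m + 1) / INR K * nth i x 0 - INR m / INR K * nth i x 0) with (nth i x 0 / INR K) by (field; lra).
        rewrite Rabs_right by (apply Rle_ge, div_nonneg; lra).
        apply (Rmult_lt_reg_r (INR K)); auto. unfold Rdiv. rewrite Rmult_assoc, Rinv_l by lra. lra. }
    replace (f (zm (S m))) with (Cadd (Csub (f (zm (S m))) (f (zm m))) (f (zm m))) at 1
      by (destruct (f (zm (S m))), (f (zm m)); unfold Cadd, Csub; simpl; f_equal; ring).
    pose proof (Cmod_tri (Csub (f (zm (S m))) (f (zm m))) (f (zm m))). lra. }
  assert (forall m, (m <= K)%nat -> Cmod (f (zm m)) <= Cmod (f z0) + INR m).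
  { induction m; intros Hm. - rewrite E0. simpl; lra.
    - rewrite S_INR. pose proof (Hstep m ltac:(lia)). specialize (IHm ltac:(lia)). lra. }
  rewrite <- EK. apply H1; lia.
Qed.


Definition kk (M : nat) (t : R) : R := ((1 + cos t) / 2) ^ M.
Fixpoint KL (M : nat) : list (Z * Cpx) :=
  match M with
  | O => [(0%Z, (1,0))]
  | S M' => map (fun p => (fst p, Cscale (1/2) (snd p))) (KL M') ++
            map (fun p => ((fst p + 1)%Z, Cscale (1/4) (snd p))) (KL M') ++
            map (fun p => ((fst p - 1)%Z, Cscale (1/4) (snd p))) (KL M')
  end.
Definition kval (M : nat) (t : R) : Cpx := Csum (map (fun p => Cmul (snd p) (Cexpi (IZR (fst p) * t))) (KL M)).

Lemma kval_eq M t : kval M t = (kk M t, 0).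
Proof.
  induction M.
  - unfold kval, kk; simpl. rewrite Rmult_0_l, Cexpi_0. unfold Cmul, Cadd; simpl; f_equal; ring.
  - unfold kval in *. simpl KL. rewrite !map_app, !Csum_app, !map_map. cbn [fst snd].
    rewrite (Csum_ext _ (fun p => Cscale (1/2) (Cmul (snd p) (Cexpi (IZR (fst p) * t))))).
    2:{ intros p _. destruct (snd p), (Cexpi (IZR (fst p) * t)); unfold Cscale, Cmul; simpl; f_equal; ring. }
    rewrite (Csum_ext (fun x => Cmul (Cscale (1/4) (snd x)) (Cexpi (IZR (fst x + 1) * t)))
      (fun p => Cmul (Cscale (1/4) (Cmul (snd p) (Cexpi (IZR (fst p) * t)))) (Cexpi t))).
    2:{ intros p _. rewrite plus_IZR, Rmult_plus_distr_r, Rmult_1_l, Cexpi_add.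
        destruct (snd p), (Cexpi (IZR (fst p) * t)), (Cexpi t); unfold Cscale, Cmul; simpl; f_equal; ring. }
    rewrite (Csum_ext (fun x => Cmul (Cscale (1/4) (snd x)) (Cexpi (IZR (fst x - 1) * t)))
      (fun p => Cmul (Cscale (1/4) (Cmul (snd p) (Cexpi (IZR (fst p) * t)))) (Cexpi (- t)))).
    2:{ intros p _. rewrite minus_IZR. replace ((IZR (fst p) - 1) * t) with (IZR (fst p) * t + - t) by ring.
        rewrite Cexpi_add.
        destruct (snd p), (Cexpi (IZR (fst p) * t)), (Cexpi (- t)); unfold Cscale, Cmul; simpl; f_equal; ring. }
    rewrite <- !Csum_mul_r, !Csum_scale, IHM. unfold kk. simpl pow.
    unfold Cexpi. rewrite cos_neg, sin_neg. unfold Cscale, Cmul, Cadd; simpl; f_equal; field.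
Qed.

Lemma KL_bound M p : In p (KL M) -> (Z.abs (fst p) <= Z.of_nat M)%Z.
Proof.
  revert p; induction M; intros p Hp; simpl in Hp.
  - destruct Hp as [<-|[]]. simpl; lia.
  - rewrite !in_app_iff, !in_map_iff in Hp.
    destruct Hp as [[q [<- Hq]]|[[q [<- Hq]]|[q [<- Hq]]]]; specialize (IHM q Hq); simpl; lia.
Qed.

Lemma kk_range M t : 0 <= kk M t <= 1.
Proof.
  unfold kk. pose proof (COS_bound t). assert (0 <= (1 + cos t)/2 <= 1) by lra.
  split. apply pow_le; lra. apply Rle_trans with (1 ^ M); [apply pow_incr; lra | rewrite pow1; lra].
Qed.
Lemma kk_0 M : kk M 0 = 1.
Proof. unfold kk. rewrite cos_0. replace ((1+1)/2) with 1 by field. apply pow1. Qed.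

Definition C0 (M : nat) : R := fst (Csum (map (fun p => if Z.eq_dec (fst p) 0 then snd p else (0,0)) (KL M))).

Lemma sum1_eq N n : (Z.abs n < Z.of_nat N)%Z -> sum1 N n = if Z.eq_dec n 0 then (INR N, 0) else (0,0).
Proof. intro H. destruct (Z.eq_dec n 0). - subst; apply sum1_0. - apply sum1_nz; auto. Qed.

Lemma kk_sum M N t : (M < N)%nat ->
  Rsum (map (fun s => kk M (t - 2 * PI * INR s / INR N)) (seq 0 N)) = INR N * C0 M.
Proof.
  intro HN.
  assert (E: (Rsum (map (fun s => kk M (t - 2 * PI * INR s / INR N)) (seq 0 N)), 0) =
     Csum (map (fun p => Cmul (Cmul (snd p) (Cexpi (IZR (fst p) * t))) (sum1 N (- fst p))) (KL M))).
  { rewrite <- (Csum_real (fun s => kk M (t - 2 * PI * INR s / INR N))).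
    rewrite (Csum_ext _ (fun s => kval M (t - 2 * PI * INR s / INR N))) by (intros; rewrite kval_eq; auto).
    unfold kval. rewrite Csum_swap. apply Csum_ext. intros p _. unfold sum1. rewrite <- Csum_mul_l.
    apply Csum_ext. intros s _. rewrite opp_IZR.
    replace (IZR (fst p) * (t - 2 * PI * INR s / INR N)) with (IZR (fst p) * t + - IZR (fst p) * (2 * PI * INR s / INR N)) by ring.
    rewrite Cexpi_add. destruct (snd p), (Cexpi (IZR (fst p) * t)), (Cexpi (- IZR (fst p) * (2 * PI * INR s / INR N))); unfold Cmul; simpl; f_equal; ring. }
  assert (E2: fst (Csum (map (fun p => Cmul (Cmul (snd p) (Cexpi (IZR (fst p) * t))) (sum1 N (- fst p))) (KL M))) = INR N * C0 M).
  { unfold C0. rewrite !Csum_fst, <- Rsum_mult. apply Rsum_ext. intros p Hp.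
    pose proof (KL_bound M p Hp). rewrite sum1_eq by lia.
    destruct p as [n [c1 c2]]. cbn [fst snd] in *.
    destruct (Z.eq_dec (- n) 0); destruct (Z.eq_dec n 0); try lia.
    - subst n. rewrite Rmult_0_l, Cexpi_0. unfold Cmul; simpl; ring.
    - destruct (Cexpi (IZR n * t)); unfold Cmul; simpl; ring. }
  rewrite <- E2, <- E. auto.
Qed.

Lemma C0_lb M : / (INR M + 1) <= C0 M.
Proof.
  pose proof (kk_sum M (S M) 0 ltac:(lia)) as H.
  rewrite <- cons_seq in H. cbn [map] in H. change (Rsum (?a :: ?l)) with (a + Rsum l) in H.
  replace (kk M (0 - 2 * PI * INR 0 / INR (S M))) with 1 in H
    by (rewrite <- (kk_0 M); f_equal; simpl; unfold Rdiv; ring).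
  assert (Hs: 0 <= Rsum (map (fun s => kk M (0 - 2 * PI * INR s / INR (S M))) (seq 1 M))).
  { apply Rsum_nonneg. intros. apply kk_range. }
  rewrite S_INR in H, Hs. assert (0 < INR M + 1) by (pose proof (pos_INR M); lra).
  apply (Rmult_le_reg_l (INR M + 1)); auto. rewrite Rinv_r by lra. lra.
Qed.

Definition Kd (M : nat) (x y : list R) : R := Rprod (map (fun p => kk M (fst p - snd p)) (combine x y)).

Lemma Kd_range M x y : 0 <= Kd M x y <= 1.
Proof.
  unfold Kd. split. - apply Rprod_nonneg. intros r Hr. apply in_map_iff in Hr. destruct Hr as [p [<- _]]. apply kk_range.
  - apply Rprod_le1. intros r Hr. apply in_map_iff in Hr. destruct Hr as [p [<- _]]. apply kk_range.
Qed.

Lemma combine_map_r {A B C} (g : B -> C) (x : list A) (j : list B) :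
  combine x (map g j) = map (fun p => (fst p, g (snd p))) (combine x j).
Proof. revert j; induction x; intros [|b j]; simpl; auto. f_equal. auto. Qed.

Lemma Rprod_const (c : R) {A} (l : list A) : Rprod (map (fun _ => c) l) = c ^ length l.
Proof. induction l; unfold Rprod in *; simpl; auto. rewrite IHl. auto. Qed.

Lemma Kd_sum d M N x : length x = d -> (M < N)%nat ->
  Rsum (map (fun j => Kd M x (grid N j)) (lbox d (seq 0 N))) = (INR N * C0 M) ^ d.
Proof.
  intros Hx HN. set (fs := map (fun xi s => kk M (xi - 2 * PI * INR s / INR N)) x).
  rewrite (Rsum_ext _ (fun j => Rprod (zapp fs j))).
  2:{ intros j _. unfold Kd, grid, fs. rewrite zapp_map, combine_map_r, map_map. auto. }
  replace d with (length fs) by (unfold fs; rewrite length_map; auto).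
  rewrite prod_sum_R. unfold fs. rewrite !map_map, length_map.
  rewrite (map_ext _ (fun _ => INR N * C0 M)) by (intro; apply kk_sum; auto).
  rewrite Rprod_const. auto.
Qed.

Lemma Kd_expand_aux x y l : length x = length l -> length y = length l ->
  Cprod (zapp (map (fun p => fun (q : Z * Cpx) => Cmul (snd q) (Cexpi (IZR (fst q) * (fst p - snd p)))) (combine x y)) l) =
  Cmul (Cprod (map snd l)) (Cexpi (dot (map fst l) x - dot (map fst l) y)).
Proof.
  revert x y; induction l as [|q l IH]; intros [|a x] [|b y] Hx Hy; simpl in *; try lia.
  - unfold zapp, Cprod, dot; simpl. rewrite Rminus_0_r, Cexpi_0. unfold Cmul; simpl; f_equal; ring.
  - unfold zapp in *. simpl. unfold Cprod in *. simpl. rewrite IH by lia.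
    unfold dot. simpl.
    replace (IZR (fst q) * a + Rsum (map (fun p => IZR (fst p) * snd p) (combine (map fst l) x)) -
      (IZR (fst q) * b + Rsum (map (fun p => IZR (fst p) * snd p) (combine (map fst l) y))))
      with (IZR (fst q) * (a - b) + (Rsum (map (fun p => IZR (fst p) * snd p) (combine (map fst l) x)) -
      Rsum (map (fun p => IZR (fst p) * snd p) (combine (map fst l) y)))) by ring.
    rewrite Cexpi_add. fold (Cprod (map snd l)).
    destruct (snd q), (Cexpi (IZR (fst q) * (a - b))), (Cprod (map snd l)), (Cexpi (Rsum _ - Rsum _)); unfold Cmul; simpl; f_equal; ring.
Qed.

Lemma Kd_expand d M x y : length x = d -> length y = d ->
  (Kd M x y, 0) = Csum (map (fun l => Cmul (Cprod (map snd l)) (Cexpi (dot (map fst l) x - dot (map fst l) y))) (lbox d (KL M))).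
Proof.
  intros Hx Hy.
  set (fs := map (fun p => fun (q : Z * Cpx) => Cmul (snd q) (Cexpi (IZR (fst q) * (fst p - snd p)))) (combine x y)).
  assert (Hfs: length fs = d) by (unfold fs; rewrite length_map, length_combine; lia).
  rewrite (Csum_ext _ (fun l => Cprod (zapp fs l))).
  2:{ intros l Hl. apply In_lbox in Hl. destruct Hl as [Hl _]. unfold fs. rewrite Kd_expand_aux; auto; lia. }
  rewrite <- Hfs at 1. rewrite prod_sum_C. unfold fs. rewrite map_map.
  unfold Kd. rewrite <- Cprod_real, map_map. f_equal. apply map_ext. intro p.
  rewrite <- kval_eq. auto.
Qed.

Definition AN (d N M : nat) (f : list R -> Cpx) (x : list R) : Cpx :=
  Cscale (/ (INR N ^ d)) (Csum (map (fun j => Cscale (Kd M x (grid N j)) (f (grid N j))) (lbox d (seq 0 N)))).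

Lemma AN_expand d N M f x : length x = d ->
  AN d N M f x = Csum (map (fun l => Cmul (Cmul (Cprod (map snd l)) (Cexpi (dot (map fst l) x))) (RS d N f (map fst l))) (lbox d (KL M))).
Proof.
  intro Hx. unfold AN, RS.
  rewrite (Csum_ext _ (fun j => Csum (map (fun l => Cmul (Cmul (Cprod (map snd l)) (Cexpi (dot (map fst l) x)))
        (Cmul (f (grid N j)) (Cexpi (- dot (map fst l) (grid N j))))) (lbox d (KL M))))).
  2:{ intros j Hj. apply In_lbox in Hj. destruct Hj as [Hj _].
      replace (Cscale (Kd M x (grid N j)) (f (grid N j))) with (Cmul (f (grid N j)) (Kd M x (grid N j), 0))
        by (destruct (f (grid N j)); unfold Cscale, Cmul; simpl; f_equal; ring).
      rewrite (Kd_expand d) by (rewrite ?grid_length; auto).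
      rewrite <- Csum_mul_l. apply Csum_ext. intros l _.
      replace (dot (map fst l) x - dot (map fst l) (grid N j)) with (dot (map fst l) x + - dot (map fst l) (grid N j)) by ring.
      rewrite Cexpi_add.
      destruct (f (grid N j)), (Cprod (map snd l)), (Cexpi (dot (map fst l) x)), (Cexpi (- dot (map fst l) (grid N j))); unfold Cmul; simpl; f_equal; ring. }
  rewrite Csum_swap, <- Csum_scale. apply Csum_ext. intros l _.
  rewrite Csum_mul_l.
  destruct (Cmul (Cprod (map snd l)) (Cexpi (dot (map fst l) x))), (Csum _); unfold Cmul, Cscale; simpl; f_equal; ring.
Qed.


Lemma cos_far t delta : 0 < delta <= PI -> (forall n : Z, delta <= Rabs (t - 2 * PI * IZR n)) -> cos t <= cos delta.
Proof.
  intros Hd H. pose proof PI_RGT_0.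
  set (n0 := Zfloor ((t + PI) / (2 * PI))). set (t' := t - 2 * PI * IZR n0).
  pose proof (Zfloor_bound ((t + PI) / (2 * PI))). fold n0 in H1.
  assert (E: (t + PI) = (t + PI) / (2 * PI) * (2 * PI)) by (field; lra).
  assert (Ht': - PI <= t' < PI) by (unfold t'; split; nra).
  assert (Hc: cos t = cos t') by (unfold t'; rewrite <- (cos_2piZ (t - 2 * PI * IZR n0) n0); f_equal; ring).
  specialize (H n0). fold t' in H. rewrite Hc.
  destruct (Rle_dec 0 t').
  - rewrite Rabs_right in H by lra. apply cos_decr_1; lra.
  - rewrite Rabs_left in H by lra. rewrite <- (cos_neg t'). apply cos_decr_1; lra.
Qed.

Lemma kk_far M t delta : 0 < delta <= PI -> (forall n : Z, delta <= Rabs (t - 2 * PI * IZR n)) ->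
  kk M t <= ((1 + cos delta) / 2) ^ M.
Proof.
  intros Hd H. unfold kk. apply pow_incr. pose proof (cos_far t delta Hd H). pose proof (COS_bound t). lra.
Qed.

Lemma Rprod_le_factor l a b : In a l -> (forall r, In r l -> 0 <= r <= 1) -> a <= b -> Rprod l <= b.
Proof.
  induction l as [|r l IH]; intros Ha Hr Hab; [contradiction|]. unfold Rprod in *; simpl.
  pose proof (Hr r (or_introl eq_refl)).
  assert (0 <= fold_right Rmult 1 l) by (apply Rprod_nonneg; intros z Hz; apply (Hr z); right; auto).
  assert (fold_right Rmult 1 l <= 1) by (apply Rprod_le1; intros z Hz; apply (Hr z); right; auto).
  destruct Ha as [->|Ha].
  - nra.
  - assert (fold_right Rmult 1 l <= b) by (apply IH; auto; intros z Hz; apply (Hr z); right; auto). nra.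
Qed.

Lemma Kd_far d M x y i delta : length x = d -> length y = d -> (i < d)%nat -> 0 < delta <= PI ->
  (forall n : Z, delta <= Rabs (nth i x 0 - nth i y 0 - 2 * PI * IZR n)) -> Kd M x y <= ((1 + cos delta) / 2) ^ M.
Proof.
  intros Hx Hy Hi Hd H. unfold Kd. apply (Rprod_le_factor _ (kk M (nth i x 0 - nth i y 0))).
  - apply in_map_iff. exists (nth i x 0, nth i y 0). split; auto.
    rewrite <- combine_nth by lia. apply nth_In. rewrite length_combine. lia.
  - intros r Hr. apply in_map_iff in Hr. destruct Hr as [p [<- _]]. apply kk_range.
  - apply kk_far; auto.
Qed.

(** polynomial times geometric *)
Lemma bern h M : 0 <= h -> 1 + INR M * h <= (1 + h) ^ M.
Proof.
  intro Hh. induction M. - simpl; lra.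
  - rewrite S_INR. simpl. assert (0 <= INR M) by apply pos_INR. nra.
Qed.

Lemma lin_bound s : 0 <= s < 1 -> exists C, forall M, (INR M + 1) * s ^ M <= C.
Proof.
  intro Hs. set (s' := (1 + s) / 2). assert (Hs': 1/2 <= s' < 1) by (unfold s'; lra).
  set (h := / s' - 1). assert (Hh: 0 < h).
  { unfold h. assert (1 < / s'). { rewrite <- Rinv_1. apply Rinv_lt_contravar; lra. } lra. }
  exists (1 + / h). intro M.
  assert (E: s' ^ M * (1 + h) ^ M = 1).
  { rewrite <- Rpow_mult_distr. unfold h. replace (s' * (1 + (/ s' - 1))) with 1 by (field; lra). apply pow1. }
  pose proof (bern h M (Rlt_le _ _ Hh)). pose proof (pos_INR M).
  assert (0 <= s' ^ M) by (apply pow_le; lra).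
  assert (s ^ M <= s' ^ M) by (apply pow_incr; unfold s'; lra).
  assert (0 < / h) by (apply Rinv_0_lt_compat; auto).
  assert (s' ^ M * (1 + INR M * h) <= 1) by nra.
  assert ((INR M + 1) <= (1 + / h) * (1 + INR M * h)).
  { replace ((1 + / h) * (1 + INR M * h)) with (1 + INR M * h + / h + INR M) by (field; lra). nra. }
  assert ((INR M + 1) * s' ^ M <= 1 + / h) by nra.
  nra.
Qed.

Lemma poly_bound d : forall q, 0 <= q < 1 -> exists C, forall M, (INR M + 1) ^ d * q ^ M <= C.
Proof.
  induction d; intros q Hq.
  - exists 1. intro M. simpl. rewrite Rmult_1_l. apply Rle_trans with (1 ^ M); [apply pow_incr; lra|rewrite pow1; lra].
  - set (r := sqrt q). assert (Hr: 0 <= r < 1).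
    { unfold r. split. apply sqrt_pos. rewrite <- sqrt_1. apply sqrt_lt_1; lra. }
    assert (Er: forall M, q ^ M = r ^ M * r ^ M).
    { intro M. rewrite <- Rpow_mult_distr. unfold r. rewrite sqrt_sqrt; lra. }
    destruct (IHd r Hr) as [C1 H1]. destruct (lin_bound r Hr) as [C2 H2].
    exists (C1 * C2). intro M. rewrite Er. simpl.
    assert (0 <= (INR M + 1) ^ d * r ^ M) by (apply Rmult_le_pos; apply pow_le; [pose proof (pos_INR M)|]; lra).
    assert (0 <= (INR M + 1) * r ^ M) by (apply Rmult_le_pos; [pose proof (pos_INR M)|apply pow_le]; lra).
    specialize (H1 M). specialize (H2 M).
    replace ((INR M + 1) * (INR M + 1) ^ d * (r ^ M * r ^ M)) with (((INR M + 1) ^ d * r ^ M) * ((INR M + 1) * r ^ M)) by ring.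
    apply Rmult_le_compat; auto.
Qed.

Lemma poly_geom d q : 0 <= q < 1 -> forall eps, 0 < eps -> exists M0, forall M, (M >= M0)%nat -> (INR M + 1) ^ d * q ^ M <= eps.
Proof.
  intros Hq e He. set (r := sqrt q). assert (Hr: 0 <= r < 1).
  { unfold r. split. apply sqrt_pos. rewrite <- sqrt_1. apply sqrt_lt_1; lra. }
  assert (Er: forall M, q ^ M = r ^ M * r ^ M).
  { intro M. rewrite <- Rpow_mult_distr. unfold r. rewrite sqrt_sqrt; lra. }
  destruct (poly_bound d r Hr) as [C HC].
  assert (HC0: 0 <= C). { specialize (HC 0%nat). assert (0 <= (INR 0 + 1) ^ d * r ^ 0).
    { apply Rmult_le_pos; apply pow_le; simpl; lra. } lra. }
  destruct (pow_lt_1_zero r ltac:(rewrite Rabs_right; lra) (e / (C + 1)) ltac:(apply Rdiv_lt_0_compat; lra)) as [M0 HM0].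
  exists M0. intros M HM. specialize (HM0 M HM). rewrite Rabs_right in HM0 by (apply Rle_ge, pow_le; lra).
  rewrite Er. specialize (HC M).
  assert (0 <= r ^ M) by (apply pow_le; lra).
  assert (0 <= (INR M + 1) ^ d) by (apply pow_le; pose proof (pos_INR M); lra).
  replace ((INR M + 1) ^ d * (r ^ M * r ^ M)) with (((INR M + 1) ^ d * r ^ M) * r ^ M) by ring.
  apply Rle_trans with (C * (e / (C + 1))).
  - apply Rmult_le_compat; auto. apply Rmult_le_pos; auto. lra.
  - apply (Rmult_le_reg_r (C + 1)); [lra|]. unfold Rdiv. rewrite Rmult_assoc, (Rmult_assoc e), Rinv_l by lra. nra.
Qed.


Lemma C0_pos M : 0 < C0 M.
Proof. eapply Rlt_le_trans; [|apply C0_lb]. apply Rinv_0_lt_compat. pose proof (pos_INR M); lra. Qed.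

Lemma Csum_scale_var' {A} (f : A -> R) X l : Csum (map (fun a => Cscale (f a) X) l) = Cscale (Rsum (map f l)) X.
Proof. induction l; simpl. - unfold Cscale; f_equal; ring. - rewrite IHl. unfold Cscale, Cadd; simpl; f_equal; ring. Qed.

Lemma approx d f : contT d f -> forall eps, 0 < eps -> exists M0, forall M N, (M >= M0)%nat -> (M < N)%nat ->
  forall x, in_cube d x -> Cmod (Csub (f x) (Cscale (/ (C0 M ^ d)) (AN d N M f x))) <= eps.
Proof.
  intros Hc e He.
  destruct (cube_bound d f Hc) as [B [HB0 HB]].
  destruct (UCP d f Hc (e/2) ltac:(lra)) as [delta (Hd & Hd1 & Hnear)].
  pose proof PI_RGT_0. pose proof PI2_3_2.
  assert (Hdpi: 0 < delta <= PI) by lra.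
  set (q := (1 + cos delta) / 2).
  assert (Hq: 0 <= q < 1).
  { unfold q. pose proof (COS_bound delta). assert (cos delta < cos 0) by (apply cos_decreasing_1; lra).
    rewrite cos_0 in H2. lra. }
  destruct (poly_geom d q Hq (e / (2 * (2 * B + 1))) ltac:(apply Rdiv_lt_0_compat; lra)) as [M0 HM0].
  exists M0. intros M N HM HN x [Hx Hxc].
  set (S := lbox d (seq 0 N)).
  set (c := C0 M). assert (Hc0: 0 < c) by apply C0_pos.
  assert (HN0: 0 < INR N) by (apply lt_0_INR; lia).
  set (Nd := INR N ^ d). assert (HNd: 0 < Nd) by (apply pow_lt; auto).
  assert (Hcd: 0 < c ^ d) by (apply pow_lt; auto).
  assert (HKs: Rsum (map (fun j => Kd M x (grid N j)) S) = Nd * c ^ d).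
  { unfold S, Nd, c. rewrite (Kd_sum d) by auto. apply Rpow_mult_distr. }
  set (Sig := Csum (map (fun j => Cscale (Kd M x (grid N j)) (Csub (f x) (f (grid N j)))) S)).
  assert (ED: Csub (f x) (Cscale (/ c ^ d) (AN d N M f x)) = Cscale (/ c ^ d) (Cscale (/ Nd) Sig)).
  { unfold Sig, AN. fold S Nd.
    rewrite (Csum_ext (fun j => Cscale (Kd M x (grid N j)) (Csub (f x) (f (grid N j)))) (fun j => Csub (Cscale (Kd M x (grid N j)) (f x)) (Cscale (Kd M x (grid N j)) (f (grid N j))))).
    2:{ intros; rewrite Cscale_sub; auto. }
    rewrite Csum_sub, (Csum_scale_var' (fun j => Kd M x (grid N j))), HKs.
    destruct (f x), (Csum (map (fun j => Cscale (Kd M x (grid N j)) (f (grid N j))) S)).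
    unfold Csub, Cscale; simpl; f_equal; field; lra. }
  rewrite ED, !Cmod_scale.
  rewrite (Rabs_right (/ c ^ d)) by (apply Rle_ge; left; apply Rinv_0_lt_compat; auto).
  rewrite (Rabs_right (/ Nd)) by (apply Rle_ge; left; apply Rinv_0_lt_compat; auto).
  assert (Hterm: forall j, In j S -> Cmod (Cscale (Kd M x (grid N j)) (Csub (f x) (f (grid N j)))) <=
     e / 2 * Kd M x (grid N j) + 2 * B * q ^ M).
  { intros j Hj. destruct (grid_in_cube d N j Hj) as [Hyl Hyc].
    pose proof (Kd_range M x (grid N j)) as HK.
    rewrite Cmod_scale, Rabs_right by lra.
    assert (0 <= q ^ M) by (apply pow_le; lra).
    destruct (classic (forall i, (i < d)%nat -> exists n : Z, Rabs (nth i (grid N j) 0 - nth i x 0 - 2 * PI * IZR n) < delta)) as [Hn|Hn].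
    - assert (Cmod (Csub (f (grid N j)) (f x)) < e / 2) by (apply Hnear; auto; split; auto).
      rewrite Cmod_opp_sub. assert (0 <= 2 * B * q ^ M) by nra. nra.
    - apply not_all_ex_not in Hn. destruct Hn as [i Hi].
      apply imply_to_and in Hi. destruct Hi as [Hi Hn].
      assert (Hfar: forall n : Z, delta <= Rabs (nth i x 0 - nth i (grid N j) 0 - 2 * PI * IZR n)).
      { intro n. apply Rnot_lt_le. intro Hlt. apply Hn. exists (Z.opp n). rewrite opp_IZR.
        replace (nth i (grid N j) 0 - nth i x 0 - 2 * PI * - IZR n) with (- (nth i x 0 - nth i (grid N j) 0 - 2 * PI * IZR n)) by ring.
        rewrite Rabs_Ropp. auto. }
      pose proof (Kd_far d M x (grid N j) i delta Hx Hyl Hi Hdpi Hfar) as Hkf. fold q in Hkf.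
      assert (Cmod (Csub (f x) (f (grid N j))) <= 2 * B).
      { replace (Csub (f x) (f (grid N j))) with (Cadd (f x) (Cscale (-1) (f (grid N j))))
          by (destruct (f x), (f (grid N j)); unfold Cadd, Csub, Cscale; simpl; f_equal; ring).
        eapply Rle_trans; [apply Cmod_tri|]. rewrite Cmod_scale. replace (Rabs (-1)) with 1 by (unfold Rabs; destruct Rcase_abs; lra).
        pose proof (HB x (conj Hx Hxc)). pose proof (HB (grid N j) (conj Hyl Hyc)). lra. }
      pose proof (Cmod_ge0 (Csub (f x) (f (grid N j)))).
      assert (Kd M x (grid N j) * Cmod (Csub (f x) (f (grid N j))) <= q ^ M * (2 * B)) by (apply Rmult_le_compat; lra).
      nra. }
  assert (HSig: Cmod Sig <= e / 2 * (Nd * c ^ d) + 2 * B * q ^ M * Nd).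
  { unfold Sig. eapply Rle_trans; [apply Cmod_Csum|].
    eapply Rle_trans; [apply (Rsum_le _ (fun j => e / 2 * Kd M x (grid N j) + 2 * B * q ^ M)); auto|].
    rewrite Rsum_plus, Rsum_mult, HKs, Rsum_const. unfold S. rewrite length_lbox, length_seq, pow_INR. fold Nd. lra. }
  assert (Hinv: / c ^ d <= (INR M + 1) ^ d).
  { pose proof (C0_lb M). fold c in H1. assert (0 < INR M + 1) by (pose proof (pos_INR M); lra).
    replace ((INR M + 1) ^ d) with (/ (/ (INR M + 1)) ^ d) by (rewrite pow_inv, Rinv_inv; auto).
    apply Rinv_le_contravar. apply pow_lt, Rinv_0_lt_compat; auto. apply pow_incr. split; [left; apply Rinv_0_lt_compat|]; auto. }
  specialize (HM0 M HM).
  assert (0 <= Cmod Sig) by apply Cmod_ge0.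
  assert (/ c ^ d * (/ Nd * Cmod Sig) <= e / 2 + 2 * B * q ^ M * / c ^ d).
  { assert (0 < / Nd) by (apply Rinv_0_lt_compat; auto). assert (0 < / c ^ d) by (apply Rinv_0_lt_compat; auto).
    apply Rle_trans with (/ c ^ d * (/ Nd * (e / 2 * (Nd * c ^ d) + 2 * B * q ^ M * Nd))).
    - apply Rmult_le_compat_l; [lra|]. apply Rmult_le_compat_l; lra.
    - right. field. lra. }
  assert (0 <= q ^ M) by (apply pow_le; lra).
  assert (2 * B * q ^ M * / c ^ d <= 2 * B * (q ^ M * (INR M + 1) ^ d)).
  { rewrite Rmult_assoc. apply Rmult_le_compat_l; [lra|]. apply Rmult_le_compat_l; auto. }
  assert (2 * B * (q ^ M * (INR M + 1) ^ d) <= 2 * B * (e / (2 * (2 * B + 1)))).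
  { apply Rmult_le_compat_l; [lra|]. rewrite Rmult_comm. auto. }
  assert (2 * B * (e / (2 * (2 * B + 1))) <= e / 2).
  { apply (Rmult_le_reg_r (2 * (2 * B + 1))); [lra|]. unfold Rdiv. field_simplify; [nra|lra]. }
  lra.
Qed.

Definition approxTP (d M N : nat) (f : list R -> Cpx) : TP :=
  map (fun l => (map fst l, Cscale (/ (C0 M ^ d)) (Cmul (Cprod (map snd l)) (RS d N f (map fst l))))) (lbox d (KL M)).

Lemma approxTP_ok d M N f : tpok d (approxTP d M N f).
Proof.
  intros mc Hmc. unfold approxTP in Hmc. apply in_map_iff in Hmc. destruct Hmc as [l [<- Hl]].
  simpl. rewrite length_map. apply In_lbox in Hl. tauto.
Qed.

Lemma approxTP_eq d M N f x : length x = d -> tpv (approxTP d M N f) x = Cscale (/ (C0 M ^ d)) (AN d N M f x).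
Proof.
  intro Hx. rewrite AN_expand by auto. unfold tpv, approxTP. rewrite map_map, <- Csum_scale.
  apply Csum_ext. intros l _. simpl.
  destruct (Cprod (map snd l)), (RS d N f (map fst l)), (Cexpi (dot (map fst l) x)); unfold Cmul, Cscale; simpl; f_equal; ring.
Qed.

Lemma RS_cv d f k : contT d f -> length k = d -> exists L, Ccv (fun N => RS d N f k) L.
Proof.
  intros Hc Hk. apply Ccauchy_cv. intros e He.
  destruct (approx d f Hc (e/3) ltac:(lra)) as [M HM].
  set (P := approxTP d M (S M) f).
  exists (S (Pmax P + zmax k)). intros n m Hn Hm.
  set (K0 := Csum (map (fun mc => if list_eq_dec Z.eq_dec (fst mc) k then snd mc else (0,0)) P)).
  assert (Hb: forall N, (N >= S (Pmax P + zmax k))%nat -> Cmod (Csub (RS d N f k) K0) <= e/3).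
  { intros N HN. unfold K0. rewrite <- (RS_tpv d N P k) by (auto; try apply approxTP_ok; lia).
    apply RS_diff; [lia|]. intros j Hj. destruct (grid_in_cube d N j Hj) as [Hl Hcu].
    unfold P. rewrite approxTP_eq by auto. apply HM; auto. split; auto. }
  pose proof (Hb n Hn). pose proof (Hb m Hm). rewrite Cmod_opp_sub in H0.
  pose proof (Csub_tri (RS d n f k) K0 (RS d m f k)). lra.
Qed.

Lemma fcoef_cv d f k : contT d f -> length k = d -> Ccv (fun N => RS d N f k) (fcoef d f k).
Proof.
  intros Hc Hk. destruct (RS_cv d f k Hc Hk) as [L HL]. rewrite fcoef_RS, (Clim_cv _ _ HL). auto.
Qed.

Lemma AN_cv d M f x : contT d f -> length x = d ->
  Ccv (fun N => Cscale (/ (C0 M ^ d)) (AN d N M f x))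
    (Cscale (/ (C0 M ^ d)) (Csum (map (fun l => Cmul (Cmul (Cprod (map snd l)) (Cexpi (dot (map fst l) x))) (fcoef d f (map fst l))) (lbox d (KL M))))).
Proof.
  intros Hc Hx. apply Ccv_scale.
  apply (Ccv_ext (fun N => Csum (map (fun l => Cmul (Cmul (Cprod (map snd l)) (Cexpi (dot (map fst l) x))) (RS d N f (map fst l))) (lbox d (KL M))))).
  { intro N. rewrite AN_expand; auto. }
  apply (Ccv_Csum (lbox d (KL M)) (fun l N => Cmul (Cmul (Cprod (map snd l)) (Cexpi (dot (map fst l) x))) (RS d N f (map fst l)))).
  intros l Hl. apply Ccv_mul_l. apply fcoef_cv; auto. rewrite length_map. apply In_lbox in Hl; tauto.
Qed.

Lemma unique d f h : contT d f -> contT d h -> (forall k, length k = d -> fcoef d f k = fcoef d h k) ->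
  forall x, length x = d -> f x = h x.
Proof.
  intros Hf Hh Hco x Hx.
  destruct (reduce_cube d x Hx) as [n Hn]. set (x' := zshift d x n) in *.
  rewrite <- (per_vec d f x n), <- (per_vec d h x n) by auto. fold x'.
  destruct Hn as [Hx' Hx'c].
  assert (forall e, 0 < e -> Cmod (Csub (f x') (h x')) <= 2 * e).
  { intros e He. destruct (approx d f Hf e He) as [M1 HM1]. destruct (approx d h Hh e He) as [M2 HM2].
    set (M := Nat.max M1 M2).
    set (G := Cscale (/ (C0 M ^ d)) (Csum (map (fun l => Cmul (Cmul (Cprod (map snd l)) (Cexpi (dot (map fst l) x'))) (fcoef d f (map fst l))) (lbox d (KL M))))).
    assert (Gf: Cmod (Csub (f x') G) <= e).
    { apply (Ccv_le _ _ _ _ (AN_cv d M f x' Hf Hx')). exists (S M). intros N HN. apply HM1; try lia. split; auto. }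
    assert (Gh: Cmod (Csub (h x') G) <= e).
    { replace G with (Cscale (/ (C0 M ^ d)) (Csum (map (fun l => Cmul (Cmul (Cprod (map snd l)) (Cexpi (dot (map fst l) x'))) (fcoef d h (map fst l))) (lbox d (KL M))))).
      - apply (Ccv_le _ _ _ _ (AN_cv d M h x' Hh Hx')). exists (S M). intros N HN. apply HM2; try lia. split; auto.
      - unfold G. f_equal. apply Csum_ext. intros l Hl. rewrite Hco; auto. rewrite length_map. apply In_lbox in Hl; tauto. }
    pose proof (Csub_tri (f x') G (h x')). rewrite Cmod_opp_sub in Gh. lra. }
  assert (Cmod (Csub (f x') (h x')) = 0).
  { apply Rle_antisym; [|apply Cmod_ge0]. apply Rnot_lt_le. intro Hlt.
    specialize (H (Cmod (Csub (f x') (h x')) / 4) ltac:(lra)). lra. }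
  apply Cmod_eq0 in H0. destruct (f x'), (h x'). unfold Csub in H0; simpl in H0. inversion H0. f_equal; lra.
Qed.


Definition zeros (d : nat) : list Z := repeat 0%Z d.
Definition delta0 (d : nat) (k : list Z) : Cpx := if list_eq_dec Z.eq_dec k (zeros d) then (1,0) else (0,0).

Lemma zeros_in_zbox d N : In (zeros d) (zbox d N).
Proof.
  unfold zbox, zeros. apply In_lbox. rewrite repeat_length. split; auto.
  intros z Hz. apply repeat_spec in Hz. subst. apply In_zrange. lia.
Qed.

Lemma A_partial_delta0 d N : A_partial d (delta0 d) N = 1.
Proof.
  unfold A_partial.
  transitivity (fst (Csum (map (fun k => if list_eq_dec Z.eq_dec k (zeros d) then (fun _ => (1,0)) k else (0,0)) (zbox d N)))).
  - rewrite Csum_fst. apply Rsum_ext. intros k _. unfold delta0. destruct list_eq_dec; simpl.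
    + rewrite Cmod_real, Rabs_R1. auto.
    + apply Cmod_00.
  - rewrite (Csum_delta (list_eq_dec Z.eq_dec) (fun _ => (1,0))); auto.
    + unfold zbox. apply NoDup_lbox, NoDup_zrange.
    + apply zeros_in_zbox.
Qed.

Lemma in_A_delta0 d : in_A d (delta0 d).
Proof. exists 1. intros r [N ->]. rewrite A_partial_delta0. lra. Qed.
Lemma normA_delta0 d : normA d (delta0 d) = 1.
Proof.
  unfold normA. apply Rle_antisym.
  - apply Rsup_le. exists 1, 0%nat. rewrite A_partial_delta0; auto. intros r [N ->]. rewrite A_partial_delta0. lra.
  - apply Rsup_ub. apply in_A_delta0. exists 0%nat. rewrite A_partial_delta0; auto.
Qed.

Lemma dot_zeros d x : dot (zeros d) x = 0.
Proof. unfold zeros. revert x; induction d; intros [|a x]; unfold dot in *; simpl; auto. rewrite IHd. ring. Qed.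

Lemma lbox_single d : lbox d (seq 0 1) = [repeat 0%nat d].
Proof. change (seq 0 1) with [0%nat]. induction d; simpl; auto. rewrite IHd. auto. Qed.

Lemma phiprod_zeros psi d : admissible psi -> phiprod psi (repeat 0%nat d) (zeros d) = 1.
Proof.
  intros Ha. pose proof Ha as (_&_&_&_&H1). unfold phiprod, zeros. induction d; simpl; auto.
  rewrite IHd. rewrite H1 by lra. ring.
Qed.

Lemma normS_delta0 psi d : admissible psi -> normS psi d (delta0 d) = 1.
Proof.
  intro Ha. destruct (part1 psi d (delta0 d) Ha (in_A_delta0 d)) as [HS Hle]. rewrite normA_delta0 in Hle.
  apply Rle_antisym; auto.
  eapply Rle_trans; [|apply (S_le_normS psi d (delta0 d) 0%nat HS)].
  unfold S_partial. rewrite lbox_single. simpl. rewrite Rplus_0_r.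
  assert (Hb: bounded_fun d (block psi d (delta0 d) (repeat 0%nat d))).
  { apply in_S_bounded; auto. apply repeat_length. }
  eapply Rle_trans; [|apply (supnorm_ub d _ (repeat 0 d) Hb (repeat_length _ _))].
  rewrite (block_cs psi d (delta0 d) (repeat 0%nat d) 0%nat) by (auto; try apply repeat_length; intros s Hs; apply repeat_spec in Hs; lia).
  unfold csum.
  rewrite (Csum_ext _ (fun k => if list_eq_dec Z.eq_dec k (zeros d) then (fun k => Cscale (phiprod psi (repeat 0%nat d) k) (Cmul (1,0) (Cexpi (dot k (repeat 0 d))))) k else (0,0))).
  2:{ intros k _. unfold delta0. destruct list_eq_dec; auto. destruct (Cexpi (dot k (repeat 0 d))). unfold Cscale, Cmul; simpl; f_equal; ring. }
  rewrite (Csum_delta (list_eq_dec Z.eq_dec) (fun k => Cscale (phiprod psi (repeat 0%nat d) k) (Cmul (1,0) (Cexpi (dot k (repeat 0 d)))))).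
  - rewrite phiprod_zeros, dot_zeros, Cexpi_0 by auto. unfold Cscale, Cmul; simpl.
    replace (1 * (1 * 1 - 0 * 0), 1 * (1 * 0 + 0 * 1)) with (1, 0) by (f_equal; ring).
    rewrite Cmod_real, Rabs_R1. lra.
  - unfold zbox. apply NoDup_lbox, NoDup_zrange.
  - apply zeros_in_zbox.
Qed.

Definition one_fun : list R -> Cpx := fun _ => (1, 0).

Lemma contT_one d : contT d one_fun.
Proof.
  split.
  - intros x Hx e He. exists 1. split; [lra|]. intros. unfold one_fun. rewrite Csub_diag, Cmod_00. auto.
  - intros. auto.
Qed.

Lemma fcoef_one d k : length k = d -> fcoef d one_fun k = delta0 d k.
Proof.
  intro Hk. rewrite fcoef_RS. apply Clim_cv. apply Ccv_eventually.
  set (P := [(zeros d, (1,0))] : TP).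
  assert (Hok: tpok d P). { intros mc [<-|[]]. simpl. apply repeat_length. }
  assert (E: one_fun = tpv P).
  { apply functional_extensionality. intro x. unfold tpv, P, one_fun. simpl. rewrite dot_zeros, Cexpi_0.
    unfold Cmul, Cadd; simpl; f_equal; ring. }
  exists (S (Pmax P + zmax k)). intros N HN. rewrite E, (RS_tpv d) by (auto; lia).
  unfold P, delta0. simpl. destruct (list_eq_dec Z.eq_dec (zeros d) k); destruct (list_eq_dec Z.eq_dec k (zeros d));
    try (exfalso; congruence); unfold Cadd; simpl; f_equal; ring.
Qed.

Lemma supnorm_one d : supnorm d one_fun = 1.
Proof.
  apply Rle_antisym.
  - apply supnorm_le. intros. unfold one_fun. rewrite Cmod_real, Rabs_R1. lra.
  - assert (Hb: bounded_fun d one_fun). { exists 1. intros r [x [_ ->]]. unfold one_fun. rewrite Cmod_real, Rabs_R1. lra. }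
    pose proof (supnorm_ub d one_fun (repeat 0 d) Hb (repeat_length _ _)). unfold one_fun in H at 1.
    rewrite Cmod_real, Rabs_R1 in H. auto.
Qed.

Theorem mainTheorem11 (d : nat) (psi : R -> R) :
  (1 <= d)%nat -> admissible psi ->
  (forall g, in_A d g -> in_S psi d g /\ normS psi d g <= normA d g) /\
  is_lub (fun r => exists g, in_A d g /\ normA d g <= 1 /\ r = normS psi d g) 1 /\
  (forall g, in_S psi d g ->
     exists f, contT d f /\ (forall k, length k = d -> fcoef d f k = g k) /\
               supnorm d f <= normS psi d g) /\
  is_lub (fun r => exists g f, in_S psi d g /\ normS psi d g <= 1 /\
            contT d f /\ (forall k, length k = d -> fcoef d f k = g k) /\
            r = supnorm d f) 1.
Proof.
  intros Hd Ha. split; [|split; [|split]].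
  - intros g Hg. apply part1; auto.
  - split.
    + intros r [g (Hg & Hn & ->)]. destruct (part1 psi d g Ha Hg). lra.
    + intros b Hb. rewrite <- (normS_delta0 psi d Ha). apply Hb. exists (delta0 d).
      split; [apply in_A_delta0|]. split; auto. rewrite normA_delta0; lra.
  - intros g Hg. exists (Ffun psi d g). apply part3; auto.
  - split.
    + intros r (g & f & HS & Hn & Hc & Hco & ->).
      destruct (part3 psi d g Ha HS) as (HcF & HcoF & HsF).
      assert (E: forall x, length x = d -> f x = Ffun psi d g x).
      { apply unique; auto. intros k Hk. rewrite Hco, HcoF; auto. }
      apply supnorm_le. intros x Hx. rewrite E by auto. eapply Rle_trans; [apply F_bound; auto|]. auto.
    + intros b Hb. rewrite <- (supnorm_one d). apply Hb. exists (delta0 d), one_fun.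
      destruct (part1 psi d (delta0 d) Ha (in_A_delta0 d)) as [HS _].
      split; auto. split; [rewrite normS_delta0; auto; lra|]. split; [apply contT_one|]. split; auto.
      intros k Hk. apply fcoef_one; auto.
Qed.
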